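(* For all session types $S,T\in\mathcal{ST}$: $S=_{\mathsf{sbt}}T$ if and only if $\mathcal M(S)\sqsubseteq\mathcal M(T)$ and $\mathcal M(T)\sqsubseteq\mathcal M(S)$.
   Context: Session types. Fix a set $BT$ of base types with a preorder $\leq_{\mathsf b}$ and a countable set $\mathcal L$ of labels. Session type terms: $T::=\mathsf{end}\mid ?[M]T\mid ![M]T\mid \&\langle l_1{:}T_1,\dots,l_n{:}T_n\rangle\mid \oplus\langle l_1{:}T_1,\dots,l_n{:}T_n\rangle\mid \mu X.T\mid X$ ($n\ge1$, labels distinct), $M::=T\mid\mathtt t$, $\mathtt t\in BT$. Guarded: in every subterm $\mu X.T'$ every occurrence of $X$ in $T'$ lies under a constructor other than $\mu$; $\mathcal{ST}$ = closed guarded terms. $\mathrm{unfold}(\mu X.T')=\mathrm{unfold}(T'[\mu X.T'/X])$, otherwise $\mathrm{unfold}(T)=T$. Subtyping $\leq$ is the greatest $R\subseteq\mathcal{ST}^2$ such that for $(T,S)\in R$: if $\mathrm{unfold}(T)=\mathsf{end}$ then $\mathrm{unfold}(S)=\mathsf{end}$; if $\mathrm{unfold}(T)=?[\mathtt t_1]S_1$ then $\mathrm{unfold}(S)=?[\mathtt t_2]S_2$, $S_1RS_2$, $\mathtt t_1\leq_{\mathsf b}\mathtt t_2$; if $\mathrm{unfold}(T)=![\mathtt t_1]S_1$ then $\mathrm{unfold}(S)=![\mathtt t_2]S_2$, $S_1RS_2$, $\mathtt t_2\leq_{\mathsf b}\mathtt t_1$; if $\mathrm{unfold}(T)=![T_1]S_1$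 then $\mathrm{unfold}(S)=![T_2]S_2$, $S_1RS_2$, $T_2RT_1$; if $\mathrm{unfold}(T)=?[T_1]S_1$ then $\mathrm{unfold}(S)=?[T_2]S_2$, $S_1RS_2$, $T_1RT_2$; branch $\&\langle l_1{:}T_1..l_m{:}T_m\rangle$ requires $\mathrm{unfold}(S)=\&\langle l_1{:}S_1..l_n{:}S_n\rangle$, $m\le n$, $T_iRS_i$ ($i\le m$); choice $\oplus\langle l_1{:}T_1..l_m{:}T_m\rangle$ requires $\mathrm{unfold}(S)=\oplus\langle l_1{:}S_1..l_n{:}S_n\rangle$, $n\le m$, $T_iRS_i$ ($i\le n$). Type equivalence: $T=_{\mathsf{sbt}}S$ iff $T\leq S$ and $S\leq T$. Contracts: terms $\sigma::=\mathbf 1\mid ?\mathtt t.\sigma\mid !\mathtt t.\sigma\mid !(\sigma).\sigma\mid ?(\sigma).\sigma\mid \sum_{i\in I}?l_i.\sigma_i\mid \bigoplus_{i\in I}!l_i.\sigma_i\mid \mu x.\sigma\mid x$; $\mathcal{SC}$ = closed guarded terms. LTS: $\mathbf 1\xrightarrow{\checkmark}$; $\lambda.\sigma\xrightarrow\lambda\sigma$ for prefixes ($!l.\sigma$ a one-branch internal sum is a prefix); $\bigoplus_{i\in I}!l_i.\sigma_i\xrightarrow\tau !l_i.\sigma_i$ when $|I|>1$; $\sum ?l_i.\sigma_i\xrightarrow{?l_i}\sigma_i$; $\mu x.\sigma\xrightarrow\tau\sigma[\mu x.\sigma/x]$. For $B\subseteq\mathcal{SC}^2$: $\lambda_1\bowtie_B\lambda_2$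 iff the pair is $(!l,?l)$, $(?l,!l)$, $(!\mathtt t_1,?\mathtt t_2)$ with $\mathtt t_1\leq_{\mathsf b}\mathtt t_2$, $(?\mathtt t_1,!\mathtt t_2)$ with $\mathtt t_2\leq_{\mathsf b}\mathtt t_1$, $(!(\sigma_1),?(\sigma_2))$ with $\sigma_1B\sigma_2$, or $(?(\sigma_1),!(\sigma_2))$ with $\sigma_2B\sigma_1$. $\rho\|\sigma\xrightarrow\tau_B$ by a $\tau$ of either side, or by synchronisation $\rho\xrightarrow{\lambda_1}\rho'$, $\sigma\xrightarrow{\lambda_2}\sigma'$, $\lambda_1\bowtie_B\lambda_2$, giving $\rho'\|\sigma'$. $\dashv_B$ is the greatest $R$ such that $\rho R\sigma$ implies: if $\rho\|\sigma$ has no $\xrightarrow\tau_B$ move then $\rho\xrightarrow\checkmark$ and $\sigma\xrightarrow\checkmark$; each $\rho\|\sigma\xrightarrow\tau_B\rho'\|\sigma'$ has $\rho'R\sigma'$. $\sigma_1\sqsubseteq_B\sigma_2$ iff $\forall\rho\in\mathcal{SC}$, $\rho\dashv_B\sigma_1\Rightarrow\rho\dashv_B\sigma_2$. $\sqsubseteq$ is the greatest fixed point of the monotone map $B\mapsto\sqsubseteq_B$ on preorders over $\mathcal{SC}$. $\mathcal M$ maps types to contracts homomorphically: $\mathsf{end}\mapsto\mathbf 1$, $![\mathtt t]S\mapsto!\mathtt t.\mathcal M(S)$, $?[\mathtt t]S\mapsto?\mathtt t.\mathcal M(S)$, $![T]S\mapsto!(\mathcal M(T)).\mathcal M(S)$,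 $?[T]S\mapsto?(\mathcal M(T)).\mathcal M(S)$, branch $\mapsto\sum ?l_i.\mathcal M(S_i)$, choice $\mapsto\bigoplus !l_i.\mathcal M(S_i)$, $\mu X.S\mapsto\mu x.\mathcal M(S)$, $X\mapsto x$. *)

(* Defs.v *)
From Stdlib Require Import List Arith.
Import ListNotations.

Section Defs.

(* BT: base types (preorder leb given separately); L: labels. *)
Context {BT L : Type}.

Inductive stype : Type :=
| SEnd : stype
| SInB : BT -> stype -> stype
| SOutB : BT -> stype -> stype
| SInS : stype -> stype -> stype
| SOutS : stype -> stype -> stype
| SBra : list (L * stype) -> stype
| SSel : list (L * stype) -> stype
| SMu : nat -> stype -> stype
| SVar : nat -> stype.

Fixpoint s_free (X : nat) (T : stype) : Prop :=
  match T with
  | SEnd => False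
  | SInB _ T | SOutB _ T => s_free X T
  | SInS M T | SOutS M T => s_free X M \/ s_free X T
  | SBra ls | SSel ls =>
      (fix f ls := match ls with [] => False | (_, T) :: r => s_free X T \/ f r end) ls
  | SMu Y T => X <> Y /\ s_free X T
  | SVar Y => X = Y
  end.

Fixpoint s_unguarded (X : nat) (T : stype) : Prop :=
  match T with
  | SVar Y => X = Y
  | SMu Y T => X <> Y /\ s_unguarded X T
  | _ => False
  end.

Fixpoint s_guarded (T : stype) : Prop :=
  match T with
  | SEnd | SVar _ => True
  | SInB _ T | SOutB _ T => s_guarded T
  | SInS M T | SOutS M T => s_guarded M /\ s_guarded T
  | SBra ls | SSel ls =>
      (fix f ls := match ls with [] => True | (_, T) :: r => s_guarded T /\ f r end) ls
  | SMu X T => ~ s_unguarded X T /\ s_guarded T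
  end.

Fixpoint s_wf (T : stype) : Prop :=
  match T with
  | SEnd | SVar _ => True
  | SInB _ T | SOutB _ T => s_wf T
  | SInS M T | SOutS M T => s_wf M /\ s_wf T
  | SBra ls | SSel ls =>
      ls <> [] /\ NoDup (map fst ls) /\
      (fix f ls := match ls with [] => True | (_, T) :: r => s_wf T /\ f r end) ls
  | SMu _ T => s_wf T
  end.

Definition ST (T : stype) : Prop :=
  s_wf T /\ s_guarded T /\ (forall X, ~ s_free X T).

(* substitution T[U/X]; only ever used with closed U *)
Fixpoint s_subst (X : nat) (U : stype) (T : stype) : stype :=
  match T with
  | SEnd => SEnd
  | SInB t T => SInB t (s_subst X U T)
  | SOutB t T => SOutB t (s_subst X U T)
  | SInS M T => SInS (s_subst X U M) (s_subst X U T)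
  | SOutS M T => SOutS (s_subst X U M) (s_subst X U T)
  | SBra ls => SBra (map (fun p => (fst p, s_subst X U (snd p))) ls)
  | SSel ls => SSel (map (fun p => (fst p, s_subst X U (snd p))) ls)
  | SMu Y T => if Nat.eqb X Y then SMu Y T else SMu Y (s_subst X U T)
  | SVar Y => if Nat.eqb X Y then U else SVar Y
  end.

Definition not_mu (T : stype) : Prop :=
  match T with SMu _ _ => False | _ => True end.

(* unfold as a relation: unfold T = U  <->  unfolds T U
   unfold(mu X.T') = unfold(T'[mu X.T'/X]); otherwise unfold(T) = T *)
Inductive unfolds : stype -> stype -> Prop :=
| unfolds_mu : forall X T' U,
    unfolds (s_subst X (SMu X T') T') U -> unfolds (SMu X T') U
| unfolds_other : forall T, not_mu T -> unfolds T T.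

Section Subtyping.
Variable leb : BT -> BT -> Prop.

Definition sub_sim (R : stype -> stype -> Prop) : Prop :=
  forall T S, R T S ->
    ST T /\ ST S /\
    (unfolds T SEnd -> unfolds S SEnd) /\
    (forall t1 S1, unfolds T (SInB t1 S1) ->
       exists t2 S2, unfolds S (SInB t2 S2) /\ R S1 S2 /\ leb t1 t2) /\
    (forall t1 S1, unfolds T (SOutB t1 S1) ->
       exists t2 S2, unfolds S (SOutB t2 S2) /\ R S1 S2 /\ leb t2 t1) /\
    (forall T1 S1, unfolds T (SOutS T1 S1) ->
       exists T2 S2, unfolds S (SOutS T2 S2) /\ R S1 S2 /\ R T2 T1) /\
    (forall T1 S1, unfolds T (SInS T1 S1) ->
       exists T2 S2, unfolds S (SInS T2 S2) /\ R S1 S2 /\ R T1 T2) /\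
    (forall ls, unfolds T (SBra ls) ->
       exists ls', unfolds S (SBra ls') /\
         forall l Ti, In (l, Ti) ls -> exists Si, In (l, Si) ls' /\ R Ti Si) /\
    (forall ls, unfolds T (SSel ls) ->
       exists ls', unfolds S (SSel ls') /\
         forall l Si, In (l, Si) ls' -> exists Ti, In (l, Ti) ls /\ R Ti Si).

(* subtyping: the greatest such relation (union of all simulations) *)
Definition subtype (T S : stype) : Prop :=
  exists R, sub_sim R /\ R T S.

Definition sbt_eq (T S : stype) : Prop := subtype T S /\ subtype S T.

End Subtyping.

Inductive contract : Type :=
| COne : contract
| CInB : BT -> contract -> contract
| COutB : BT -> contract -> contract
| COutC : contract -> contract -> contract
| CInC : contract -> contract -> contract
| CExt : list (L * contract) -> contract
| CInt : list (L * contract) -> contract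
| CMu : nat -> contract -> contract
| CVar : nat -> contract.

Fixpoint c_free (X : nat) (T : contract) : Prop :=
  match T with
  | COne => False
  | CInB _ T | COutB _ T => c_free X T
  | CInC M T | COutC M T => c_free X M \/ c_free X T
  | CExt ls | CInt ls =>
      (fix f ls := match ls with [] => False | (_, T) :: r => c_free X T \/ f r end) ls
  | CMu Y T => X <> Y /\ c_free X T
  | CVar Y => X = Y
  end.

Fixpoint c_unguarded (X : nat) (T : contract) : Prop :=
  match T with
  | CVar Y => X = Y
  | CMu Y T => X <> Y /\ c_unguarded X T
  | _ => False
  end.

Fixpoint c_guarded (T : contract) : Prop :=
  match T with
  | COne | CVar _ => True
  | CInB _ T | COutB _ T => c_guarded T
  | CInC M T | COutC M T => c_guarded M /\ c_guarded T
  | CExt ls | CInt ls =>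
      (fix f ls := match ls with [] => True | (_, T) :: r => c_guarded T /\ f r end) ls
  | CMu X T => ~ c_unguarded X T /\ c_guarded T
  end.

Fixpoint c_wf (T : contract) : Prop :=
  match T with
  | COne | CVar _ => True
  | CInB _ T | COutB _ T => c_wf T
  | CInC M T | COutC M T => c_wf M /\ c_wf T
  | CExt ls | CInt ls =>
      ls <> [] /\ NoDup (map fst ls) /\
      (fix f ls := match ls with [] => True | (_, T) :: r => c_wf T /\ f r end) ls
  | CMu _ T => c_wf T
  end.

Definition SC (s : contract) : Prop :=
  c_wf s /\ c_guarded s /\ (forall X, ~ c_free X s).

Fixpoint c_subst (X : nat) (U : contract) (T : contract) : contract :=
  match T with
  | COne => COne
  | CInB t T => CInB t (c_subst X U T)
  | COutB t T => COutB t (c_subst X U T)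
  | CInC M T => CInC (c_subst X U M) (c_subst X U T)
  | COutC M T => COutC (c_subst X U M) (c_subst X U T)
  | CExt ls => CExt (map (fun p => (fst p, c_subst X U (snd p))) ls)
  | CInt ls => CInt (map (fun p => (fst p, c_subst X U (snd p))) ls)
  | CMu Y T => if Nat.eqb X Y then CMu Y T else CMu Y (c_subst X U T)
  | CVar Y => if Nat.eqb X Y then U else CVar Y
  end.

(* visible actions (other than tick and tau) *)
Inductive act : Type :=
| AInB : BT -> act | AOutB : BT -> act
| AInC : contract -> act | AOutC : contract -> act
| AInL : L -> act | AOutL : L -> act.

(* 1 --tick--> *)
Definition ticks (s : contract) : Prop := s = COne.

Inductive cstep : contract -> act -> contract -> Prop :=
| cs_inB : forall t s, cstep (CInB t s) (AInB t) s
| cs_outB : forall t s, cstep (COutB t s) (AOutB t) s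
| cs_inC : forall s' s, cstep (CInC s' s) (AInC s') s
| cs_outC : forall s' s, cstep (COutC s' s) (AOutC s') s
| cs_outL : forall l s, cstep (CInt [(l, s)]) (AOutL l) s   (* !l.s prefix *)
| cs_ext : forall ls l s, In (l, s) ls -> cstep (CExt ls) (AInL l) s.

Inductive ctau : contract -> contract -> Prop :=
| ct_int : forall ls l s, 1 < length ls -> In (l, s) ls ->
    ctau (CInt ls) (CInt [(l, s)])
| ct_mu : forall x s, ctau (CMu x s) (c_subst x (CMu x s) s).

Section Compliance.
Variable leb : BT -> BT -> Prop.
Variable B : contract -> contract -> Prop.

Definition compat (a1 a2 : act) : Prop :=
  match a1, a2 with
  | AOutL l1, AInL l2 => l1 = l2
  | AInL l1, AOutL l2 => l1 = l2
  | AOutB t1, AInB t2 => leb t1 t2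
  | AInB t1, AOutB t2 => leb t2 t1
  | AOutC s1, AInC s2 => B s1 s2
  | AInC s1, AOutC s2 => B s2 s1
  | _, _ => False
  end.

(* rho || sigma --tau_B--> rho' || sigma' *)
Inductive ptau : contract -> contract -> contract -> contract -> Prop :=
| pt_l : forall r s r', ctau r r' -> ptau r s r' s
| pt_r : forall r s s', ctau s s' -> ptau r s r s'
| pt_sync : forall r s r' s' a1 a2,
    cstep r a1 r' -> cstep s a2 s' -> compat a1 a2 -> ptau r s r' s'.

Definition comply_sim (R : contract -> contract -> Prop) : Prop :=
  forall r s, R r s ->
    ((forall r' s', ~ ptau r s r' s') -> ticks r /\ ticks s) /\
    (forall r' s', ptau r s r' s' -> R r' s').

(* rho -|_B sigma : greatest such relation *)
Definition comply (r s : contract) : Prop :=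
  exists R, comply_sim R /\ R r s.

Definition sqsubB (s1 s2 : contract) : Prop :=
  SC s1 /\ SC s2 /\ forall r, SC r -> comply r s1 -> comply r s2.

End Compliance.

Definition preorder_on_SC (B : contract -> contract -> Prop) : Prop :=
  (forall x y, B x y -> SC x /\ SC y) /\
  (forall x, SC x -> B x x) /\
  (forall x y z, B x y -> B y z -> B x z).

(* [= : greatest fixed point of B |-> [=_B on preorders over SC,
   i.e. the union of all post-fixed points (Knaster-Tarski). *)
Definition sqsub (leb : BT -> BT -> Prop) (s1 s2 : contract) : Prop :=
  exists B, preorder_on_SC B /\
    (forall x y, B x y -> sqsubB leb B x y) /\ B s1 s2.

Fixpoint Mmap (T : stype) : contract :=
  match T with
  | SEnd => COne
  | SInB t U => CInB t (Mmap U)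
  | SOutB t U => COutB t (Mmap U)
  | SInS T U => CInC (Mmap T) (Mmap U)
  | SOutS T U => COutC (Mmap T) (Mmap U)
  | SBra ls => CExt (map (fun p => (fst p, Mmap (snd p))) ls)
  | SSel ls => CInt (map (fun p => (fst p, Mmap (snd p))) ls)
  | SMu X U => CMu X (Mmap U)
  | SVar X => CVar X
  end.

End Defs.

(* Main.v *)
Require Import Defs.
From Stdlib Require Import List Arith Lia Classical.
Import ListNotations.

Section TypeLemmas.
Context {BT L : Type}.
Notation stype := (@stype BT L).
Implicit Types (ls : list (L * stype)) (T U : stype).

Section Ind.
Variable P : stype -> Prop.
Hypothesis HEnd : P SEnd.
Hypothesis HInB : forall t U, P U -> P (SInB t U).
Hypothesis HOutB : forall t U, P U -> P (SOutB t U).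
Hypothesis HInS : forall M U, P M -> P U -> P (SInS M U).
Hypothesis HOutS : forall M U, P M -> P U -> P (SOutS M U).
Hypothesis HBra : forall ls, Forall (fun p => P (snd p)) ls -> P (SBra ls).
Hypothesis HSel : forall ls, Forall (fun p => P (snd p)) ls -> P (SSel ls).
Hypothesis HMu : forall x U, P U -> P (SMu x U).
Hypothesis HVar : forall x, P (SVar x).

Fixpoint sind (T : stype) : P T :=
  match T with
  | SEnd => HEnd
  | SInB t U => HInB t U (sind U)
  | SOutB t U => HOutB t U (sind U)
  | SInS M U => HInS M U (sind M) (sind U)
  | SOutS M U => HOutS M U (sind M) (sind U)
  | SBra ls => HBra ls ((fix F (ls : list (L * stype)) : Forall (fun p => P (snd p)) ls :=
       match ls with
       | [] => Forall_nil _
       | (l, U) :: r => @Forall_cons _ (fun p => P (snd p)) (l, U) r (sind U) (F r)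
       end) ls)
  | SSel ls => HSel ls ((fix F (ls : list (L * stype)) : Forall (fun p => P (snd p)) ls :=
       match ls with
       | [] => Forall_nil _
       | (l, U) :: r => @Forall_cons _ (fun p => P (snd p)) (l, U) r (sind U) (F r)
       end) ls)
  | SMu x U => HMu x U (sind U)
  | SVar x => HVar x
  end.
End Ind.

Lemma free_bra X ls : s_free X (SBra ls) <-> exists l T, In (l, T) ls /\ s_free X T.
Proof.
  simpl. induction ls as [|[l T] r IH]; simpl; split.
  - tauto. - intros (?&?&[]&_).
  - intros [H|H]. + eauto. + apply IH in H. destruct H as (l'&T'&?&?). eauto.
  - intros (l'&T'&[E|E]&H). + inversion E; subst. auto. + right. apply IH. eauto.
Qed.
Lemma free_sel X ls : s_free X (SSel ls) <-> exists l T, In (l, T) ls /\ s_free X T.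
Proof. exact (free_bra X ls). Qed.

Lemma guarded_bra ls : s_guarded (SBra ls) <-> forall l T, In (l, T) ls -> s_guarded T.
Proof.
  simpl. induction ls as [|[l T] r IH]; simpl; split.
  - tauto. - auto.
  - intros [H1 H2] l' T' [E|E]. + inversion E; subst; auto. + eapply IH; eauto.
  - intros H. split. + eauto. + apply IH. eauto.
Qed.
Lemma guarded_sel ls : s_guarded (SSel ls) <-> forall l T, In (l, T) ls -> s_guarded T.
Proof. exact (guarded_bra ls). Qed.

Lemma wf_bra ls : s_wf (SBra ls) <-> ls <> [] /\ NoDup (map fst ls) /\ forall l T, In (l, T) ls -> s_wf T.
Proof.
  simpl. split; intros (A&B&C); split; auto; split; auto; clear A B.
  - induction ls as [|[l T] r IH]; simpl in *. + tauto.
    + destruct C as [C1 C2]. intros l' T' [E|E]. * inversion E; subst; auto. * eapply IH; eauto.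
  - induction ls as [|[l T] r IH]; simpl in *. + auto.
    + split; [eauto|apply IH; eauto].
Qed.
Lemma wf_sel ls : s_wf (SSel ls) <-> ls <> [] /\ NoDup (map fst ls) /\ forall l T, In (l, T) ls -> s_wf T.
Proof. exact (wf_bra ls). Qed.


Lemma in_mapsnd {A B C : Type} (f : B -> C) (ls : list (A * B)) l c :
  In (l, c) (map (fun p => (fst p, f (snd p))) ls) <-> exists b, In (l, b) ls /\ c = f b.
Proof.
  rewrite in_map_iff. split.
  - intros ([l' b]&E&H). simpl in E. inversion E; subst. eauto.
  - intros (b&H&->). exists (l, b). auto.
Qed.

Lemma map_fst_mapsnd {A B C : Type} (f : B -> C) (ls : list (A * B)) :
  map fst (map (fun p => (fst p, f (snd p))) ls) = map fst ls.
Proof. induction ls; simpl; congruence. Qed.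

Lemma length_mapsnd {A B C : Type} (f : B -> C) (ls : list (A * B)) :
  length (map (fun p => (fst p, f (snd p))) ls) = length ls.
Proof. apply length_map. Qed.

Definition closedT T := forall y, ~ s_free y T.

Lemma unguarded_free y T : s_unguarded y T -> s_free y T.
Proof. induction T; simpl; intuition. Qed.

Lemma subst_free y X U T : s_free y (s_subst X U T) -> (s_free y T /\ y <> X) \/ s_free y U.
Proof.
  induction T using sind; intros H0; cbn [s_subst] in H0.
  - contradiction.
  - simpl in *. auto. - simpl in *. auto.
  - simpl in *. intuition. - simpl in *. intuition.
  - rewrite free_bra in H0 |- *. destruct H0 as (l&T'&Hin&Hf).
    apply in_mapsnd in Hin. destruct Hin as (b&Hin&->).
    rewrite Forall_forall in H. apply (H (l,b)) in Hf; auto. destruct Hf as [[? ?]|?]; eauto 7.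
  - rewrite free_sel in H0 |- *. destruct H0 as (l&T'&Hin&Hf).
    apply in_mapsnd in Hin. destruct Hin as (b&Hin&->).
    rewrite Forall_forall in H. apply (H (l,b)) in Hf; auto. destruct Hf as [[? ?]|?]; eauto 7.
  - destruct (Nat.eqb_spec X x); simpl in H0.
    + subst. left. simpl. intuition.
    + destruct H0 as [H1 H2]. apply IHT in H2. simpl. intuition.
  - destruct (Nat.eqb_spec X x); simpl in H0.
    + auto.
    + simpl. subst. left. auto.
Qed.

Lemma subst_unguarded y X U T : s_unguarded y (s_subst X U T) -> s_unguarded y T \/ s_unguarded y U.
Proof.
  induction T; simpl; auto; intros.
  - destruct (Nat.eqb_spec X n); simpl in H; auto.
    destruct H as [H1 H2]. apply IHT in H2. intuition.
  - destruct (Nat.eqb_spec X n); simpl in H; auto.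
Qed.

Lemma subst_wf X U T : s_wf U -> s_wf T -> s_wf (s_subst X U T).
Proof.
  intros HU. induction T using sind; intros H0; cbn [s_subst].
  - simpl; auto.
  - simpl in *; auto. - simpl in *; auto.
  - simpl in *; intuition. - simpl in *; intuition.
  - rewrite wf_bra in H0 |- *. destruct H0 as (A&B&C). split; [|split].
    + destruct ls; simpl; congruence.
    + rewrite map_fst_mapsnd. auto.
    + intros l T' Hin. apply in_mapsnd in Hin. destruct Hin as (b&Hin&->).
      rewrite Forall_forall in H. apply (H (l,b)); eauto.
  - rewrite wf_sel in H0 |- *. destruct H0 as (A&B&C). split; [|split].
    + destruct ls; simpl; congruence.
    + rewrite map_fst_mapsnd. auto.
    + intros l T' Hin. apply in_mapsnd in Hin. destruct Hin as (b&Hin&->).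
      rewrite Forall_forall in H. apply (H (l,b)); eauto.
  - destruct (Nat.eqb X x); simpl in *; auto.
  - destruct (Nat.eqb X x); simpl; auto.
Qed.

Lemma subst_guarded X U T : s_guarded U -> closedT U -> s_guarded T -> s_guarded (s_subst X U T).
Proof.
  intros HU HC. induction T using sind; intros H0; cbn [s_subst].
  - simpl; auto.
  - simpl in *; auto. - simpl in *; auto.
  - simpl in *; intuition. - simpl in *; intuition.
  - rewrite guarded_bra in H0 |- *.
    intros l T' Hin. apply in_mapsnd in Hin. destruct Hin as (b&Hin&->).
    rewrite Forall_forall in H. apply (H (l,b)); eauto.
  - rewrite guarded_sel in H0 |- *.
    intros l T' Hin. apply in_mapsnd in Hin. destruct Hin as (b&Hin&->).
    rewrite Forall_forall in H. apply (H (l,b)); eauto.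
  - simpl in H0. destruct (Nat.eqb X x); simpl; auto.
    split; [|tauto]. intros Hu. apply subst_unguarded in Hu. destruct Hu as [Hu|Hu]; [tauto|].
    apply (HC x). apply unguarded_free. auto.
  - destruct (Nat.eqb X x); simpl; auto.
Qed.

Lemma subst_closed_id X W T : ~ s_free X T -> s_subst X W T = T.
Proof.
  induction T using sind; intros H0; cbn [s_subst]; try (simpl in H0; f_equal; intuition; fail).
  - f_equal. rewrite free_bra in H0. rewrite Forall_forall in H.
    transitivity (map (fun p => p) ls); [|apply map_id]. apply map_ext_in.
    intros [l b] Hin. simpl. f_equal. apply (H (l,b) Hin). intro. apply H0. eauto.
  - f_equal. rewrite free_sel in H0. rewrite Forall_forall in H.
    transitivity (map (fun p => p) ls); [|apply map_id]. apply map_ext_in.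
    intros [l b] Hin. simpl. f_equal. apply (H (l,b) Hin). intro. apply H0. eauto.
  - simpl in H0. destruct (Nat.eqb_spec X x); auto. f_equal. apply IHT. intro. apply H0. auto.
  - simpl in H0. destruct (Nat.eqb_spec X x); subst; auto. exfalso. auto.
Qed.

Lemma subst_closed_nofree X V T : closedT V -> ~ s_free X (s_subst X V T).
Proof. intros HV Hf. apply subst_free in Hf. destruct Hf as [[_ ?]|?]; [congruence|]. eapply HV; eauto. Qed.

Lemma ST_step x (t : stype) : ST (SMu x t) -> ST (s_subst x (SMu x t) t).
Proof.
  intros (W&G&C). simpl in W, G. split; [|split].
  - apply subst_wf; simpl; auto.
  - apply subst_guarded; simpl; tauto.
  - intros y Hf. apply subst_free in Hf. destruct Hf as [[H1 H2]|H].
    + apply (C y). simpl. auto.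
    + apply (C y). auto.
Qed.

Lemma unfolds_ST T U : unfolds T U -> ST T -> ST U.
Proof. induction 1; auto. intros. apply IHunfolds. apply ST_step. auto. Qed.

Lemma unfolds_det T U1 U2 : unfolds T U1 -> unfolds T U2 -> U1 = U2.
Proof.
  intros H; revert U2; induction H; intros U2 H2.
  - inversion H2; subst. + auto. + simpl in H0. contradiction.
  - inversion H2; subst. + simpl in H. contradiction. + auto.
Qed.

Fixpoint lead T : nat := match T with SMu _ t => S (lead t) | _ => 0 end.

Lemma lead_subst X U T : ~ s_unguarded X T -> lead (s_subst X U T) = lead T.
Proof.
  induction T; simpl; intros; auto.
  - destruct (Nat.eqb_spec X n); simpl; auto. f_equal. apply IHT. intuition.
  - destruct (Nat.eqb_spec X n); simpl; auto. contradiction.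
Qed.

Lemma exists_unfold T : ST T -> exists U, unfolds T U.
Proof.
  remember (lead T) as n. revert T Heqn. induction n; intros T E H.
  - destruct T; try (eexists; apply unfolds_other; simpl; auto; fail). simpl in E. discriminate.
  - destruct T; try (simpl in E; discriminate).
    simpl in E. injection E as E.
    destruct (IHn (s_subst n0 (SMu n0 T) T)) as [U HU].
    + rewrite lead_subst; auto. destruct H as (_&G&_). simpl in G. tauto.
    + apply ST_step; auto.
    + exists U. constructor. auto.
Qed.

End TypeLemmas.

Section MLemmas.
Context {BT L : Type}.
Notation stype := (@stype BT L).
Notation contract := (@contract BT L).
Implicit Types (ls : list (L * stype)) (T U : stype) (cs : list (L * contract)) (s u : contract).

Lemma cfree_ext X cs : c_free X (CExt cs) <-> exists l c, In (l, c) cs /\ c_free X c.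
Proof.
  simpl. induction cs as [|[l c] r IH]; simpl; split.
  - tauto. - intros (?&?&[]&_).
  - intros [H|H]. + eauto. + apply IH in H. destruct H as (l'&c'&?&?). eauto.
  - intros (l'&c'&[E|E]&H). + inversion E; subst. auto. + right. apply IH. eauto.
Qed.
Lemma cfree_int X cs : c_free X (CInt cs) <-> exists l c, In (l, c) cs /\ c_free X c.
Proof. exact (cfree_ext X cs). Qed.

Lemma cguarded_ext cs : c_guarded (CExt cs) <-> forall l c, In (l, c) cs -> c_guarded c.
Proof.
  simpl. induction cs as [|[l c] r IH]; simpl; split.
  - tauto. - auto.
  - intros [H1 H2] l' c' [E|E]. + inversion E; subst; auto. + eapply IH; eauto.
  - intros H. split. + eauto. + apply IH. eauto.
Qed.
Lemma cguarded_int cs : c_guarded (CInt cs) <-> forall l c, In (l, c) cs -> c_guarded c.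
Proof. exact (cguarded_ext cs). Qed.

Lemma cwf_ext cs : c_wf (CExt cs) <-> cs <> [] /\ NoDup (map fst cs) /\ forall l c, In (l, c) cs -> c_wf c.
Proof.
  simpl. split; intros (A&B&C); split; auto; split; auto; clear A B.
  - induction cs as [|[l c] r IH]; simpl in *. + tauto.
    + destruct C as [C1 C2]. intros l' T' [E|E]. * inversion E; subst; auto. * eapply IH; eauto.
  - induction cs as [|[l c] r IH]; simpl in *. + auto.
    + split; [eauto|apply IH; eauto].
Qed.
Lemma cwf_int cs : c_wf (CInt cs) <-> cs <> [] /\ NoDup (map fst cs) /\ forall l c, In (l, c) cs -> c_wf c.
Proof. exact (cwf_ext cs). Qed.

Notation mapM ls := (map (fun p => (fst p, Mmap (snd p))) ls).

Lemma M_subst X U T : Mmap (s_subst X U T) = c_subst X (Mmap U) (Mmap T).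
Proof.
  induction T using sind; simpl; try (f_equal; auto; fail).
  - f_equal. rewrite !map_map. apply map_ext_in. rewrite Forall_forall in H.
    intros [l b] Hin. simpl. f_equal. apply (H (l,b) Hin).
  - f_equal. rewrite !map_map. apply map_ext_in. rewrite Forall_forall in H.
    intros [l b] Hin. simpl. f_equal. apply (H (l,b) Hin).
  - destruct (Nat.eqb X x); simpl; f_equal; auto.
  - destruct (Nat.eqb X x); simpl; auto.
Qed.

Lemma M_free y T : c_free y (Mmap T) -> s_free y T.
Proof.
  induction T using sind; intro Hf; try (simpl in *; intuition; fail).
  - change (c_free y (CExt (mapM ls))) in Hf. apply cfree_ext in Hf. apply free_bra.
    destruct Hf as (l&c&Hin&Hf). apply in_mapsnd in Hin. destruct Hin as (b&Hin&->).
    rewrite Forall_forall in H. exists l, b. split; auto. apply (H (l,b) Hin). auto.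
  - change (c_free y (CInt (mapM ls))) in Hf. apply cfree_int in Hf. apply free_sel.
    destruct Hf as (l&c&Hin&Hf). apply in_mapsnd in Hin. destruct Hin as (b&Hin&->).
    rewrite Forall_forall in H. exists l, b. split; auto. apply (H (l,b) Hin). auto.
Qed.

Lemma M_unguarded y T : c_unguarded y (Mmap T) -> s_unguarded y T.
Proof. induction T; simpl; intuition. Qed.

Lemma M_guarded T : s_guarded T -> c_guarded (Mmap T).
Proof.
  induction T using sind; intro Hg; try (simpl in *; intuition; fail).
  - change (c_guarded (CExt (mapM ls))). apply cguarded_ext. rewrite guarded_bra in Hg.
    intros l c Hin. apply in_mapsnd in Hin. destruct Hin as (b&Hin&->).
    rewrite Forall_forall in H. apply (H (l,b) Hin). eauto.
  - change (c_guarded (CInt (mapM ls))). apply cguarded_int. rewrite guarded_sel in Hg.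
    intros l c Hin. apply in_mapsnd in Hin. destruct Hin as (b&Hin&->).
    rewrite Forall_forall in H. apply (H (l,b) Hin). eauto.
  - simpl in *. destruct Hg as [H1 H2]. split; auto. intro. apply H1. apply M_unguarded. auto.
Qed.

Lemma M_wf T : s_wf T -> c_wf (Mmap T).
Proof.
  induction T using sind; intro Hg; try (simpl in *; intuition; fail).
  - change (c_wf (CExt (mapM ls))). apply cwf_ext. rewrite wf_bra in Hg.
    destruct Hg as (A&B&C). split; [|split].
    + destruct ls; simpl; congruence.
    + rewrite map_fst_mapsnd. auto.
    + intros l c Hin. apply in_mapsnd in Hin. destruct Hin as (b&Hin&->).
      rewrite Forall_forall in H. apply (H (l,b) Hin). eauto.
  - change (c_wf (CInt (mapM ls))). apply cwf_int. rewrite wf_sel in Hg.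
    destruct Hg as (A&B&C). split; [|split].
    + destruct ls; simpl; congruence.
    + rewrite map_fst_mapsnd. auto.
    + intros l c Hin. apply in_mapsnd in Hin. destruct Hin as (b&Hin&->).
      rewrite Forall_forall in H. apply (H (l,b) Hin). eauto.
Qed.

Lemma M_SC T : ST T -> SC (Mmap T).
Proof.
  intros (W&G&C). split; [|split].
  - apply M_wf; auto. - apply M_guarded; auto.
  - intros y Hf. apply (C y). apply M_free. auto.
Qed.

Definition c_not_mu s : Prop := match s with CMu _ _ => False | _ => True end.

Inductive cunf : contract -> contract -> Prop :=
| cunf_mu : forall x s u, cunf (c_subst x (CMu x s) s) u -> cunf (CMu x s) u
| cunf_other : forall s, c_not_mu s -> cunf s s.

Inductive mstar : contract -> contract -> Prop :=
| ms_refl : forall s, mstar s s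
| ms_step : forall x s u, mstar (c_subst x (CMu x s) s) u -> mstar (CMu x s) u.

Lemma cunf_mstar s u : cunf s u -> mstar s u.
Proof. induction 1; constructor; auto. Qed.

Lemma mstar_snoc s0 x s : mstar s0 (CMu x s) -> mstar s0 (c_subst x (CMu x s) s).
Proof.
  remember (CMu x s) as m. induction 1; subst.
  - constructor. constructor.
  - constructor. auto.
Qed.

Lemma mstar_cunf s0 s u : mstar s0 s -> cunf s u -> cunf s0 u.
Proof. induction 1; auto. intros. constructor. auto. Qed.

Lemma cunf_det s u1 u2 : cunf s u1 -> cunf s u2 -> u1 = u2.
Proof.
  intros H; revert u2; induction H; intros u2 H2.
  - inversion H2; subst. + auto. + simpl in H0. contradiction.
  - inversion H2; subst. + simpl in H. contradiction. + auto.
Qed.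

Lemma unfolds_M T U : unfolds T U -> cunf (Mmap T) (Mmap U).
Proof.
  induction 1.
  - simpl. constructor. change (CMu X (Mmap T')) with (Mmap (SMu X T')). rewrite <- M_subst. auto.
  - apply cunf_other. destruct T; simpl in *; auto.
Qed.

Lemma M_unfolds T X : cunf (Mmap T) X -> exists U, unfolds T U /\ X = Mmap U.
Proof.
  intro H. remember (Mmap T) as m. revert T Heqm. induction H; intros T E.
  - destruct T; simpl in E; try discriminate. injection E as -> ->.
    change (CMu n (Mmap T)) with (Mmap (SMu n T)) in H. rewrite <- M_subst in H.
    destruct (IHcunf (s_subst n (SMu n T) T)) as (U&HU&->). { rewrite M_subst. reflexivity. } exists U. split; auto. constructor. auto.
  - subst. exists T. split; auto. constructor. destruct T; simpl in *; auto.
Qed.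

End MLemmas.

Section Comply.
Context {BT L : Type}.
Notation contract := (@contract BT L).
Variable leb : BT -> BT -> Prop.
Variable Bc : contract -> contract -> Prop.
Notation comply := (comply leb Bc).
Notation ptau := (ptau leb Bc).

Lemma comply_tau r s r' s' : comply r s -> ptau r s r' s' -> comply r' s'.
Proof. intros (R&HR&Hr) Hp. exists R. split; auto. apply (HR r s Hr). auto. Qed.

Lemma comply_stuck r s : comply r s -> (forall r' s', ~ ptau r s r' s') -> ticks r /\ ticks s.
Proof. intros (R&HR&Hr) Hp. apply (HR r s Hr). auto. Qed.

Lemma comply_fwd r s u : comply r s -> mstar s u -> comply r u.
Proof.
  intros H Hm; revert r H; induction Hm; intros r H; auto.
  apply IHHm. eapply comply_tau; eauto. apply pt_r. constructor.
Qed.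

Lemma comply_cunf r s u : comply r s -> cunf s u -> comply r u.
Proof. intros. eapply comply_fwd; eauto. apply cunf_mstar; auto. Qed.

Lemma comply_bwd r s u : mstar s u -> comply r u -> comply r s.
Proof.
  intros Hm Hc. exists (fun r s => exists u, mstar s u /\ comply r u). split; eauto.
  clear. intros r s (u&Hm&Hc). destruct Hm as [s|x s0 u Hm].
  - split.
    + intros Hn. apply comply_stuck; auto.
    + intros r' s' Hp. exists s'. split; [constructor|]. eapply comply_tau; eauto.
  - split.
    + intros Hn. exfalso. apply (Hn r (c_subst x (CMu x s0) s0)). apply pt_r. constructor.
    + intros r' s' Hp. inversion Hp; subst.
      * exists u. split. { constructor; auto. } eapply comply_tau; eauto. apply pt_l; auto.
      * match goal with H : ctau (CMu _ _) _ |- _ => inversion H; subst end. eauto.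
      * match goal with H : cstep (CMu _ _) _ _ |- _ => inversion H end.
Qed.

Lemma comply_intro r s : (exists r' s', ptau r s r' s') ->
  (forall r' s', ptau r s r' s' -> comply r' s') -> comply r s.
Proof.
  intros Hex Hall. exists (fun a b => (a = r /\ b = s) \/ comply a b). split; auto.
  intros a b [[-> ->]|Hc].
  - split.
    + intros Hn. exfalso. destruct Hex as (r'&s'&Hp). eapply Hn; eauto.
    + intros. right. auto.
  - split.
    + intros Hn. apply comply_stuck; auto.
    + intros. right. eapply comply_tau; eauto.
Qed.

Lemma comply_one : comply COne COne.
Proof.
  exists (fun a b => a = COne /\ b = COne). split; auto.
  intros a b [-> ->]. split.
  - intros. split; reflexivity.
  - intros r' s' Hp. exfalso. inversion Hp; subst.
    + match goal with H : ctau COne _ |- _ => inversion H end.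
    + match goal with H : ctau COne _ |- _ => inversion H end.
    + match goal with H : cstep COne _ _ |- _ => inversion H end.
Qed.

End Comply.

Section Dual.
Context {BT L : Type}.
Notation stype := (@stype BT L).
Implicit Types (ls : list (L * stype)) (T U V M Z W : stype) (e : list (nat * stype)).

Fixpoint app e M : stype :=
  match e with [] => M | (x, V) :: e' => app e' (s_subst x V M) end.

Fixpoint cdual e T : stype :=
  match T with
  | SEnd => SEnd
  | SInB t U => SOutB t (cdual e U)
  | SOutB t U => SInB t (cdual e U)
  | SInS M U => SOutS (app e M) (cdual e U)
  | SOutS M U => SInS (app e M) (cdual e U)
  | SBra ls => SSel (map (fun p => (fst p, cdual e (snd p))) ls)
  | SSel ls => SBra (map (fun p => (fst p, cdual e (snd p))) ls)
  | SMu x U => SMu x (cdual ((x, app e (SMu x U)) :: e) U)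
  | SVar x => SVar x
  end.

Definition dom e := map fst e.
Definition vals_closed e := forall x V, In (x, V) e -> closedT V.

Lemma vals_closed_cons x V e : closedT V -> vals_closed e -> vals_closed ((x, V) :: e).
Proof. intros H1 H2 y W [E|E]. - inversion E; subst; auto. - eauto. Qed.

Lemma app_free e y M : vals_closed e -> s_free y (app e M) -> s_free y M /\ ~ In y (dom e).
Proof.
  revert M; induction e as [|[x V] e IH]; simpl; intros M Hc Hf.
  - auto.
  - specialize (IH (s_subst x V M) (fun z W Hin => Hc z W (or_intror Hin)) Hf) as Hf2. clear Hf. rename Hf2 into Hf.
    destruct Hf as [Hf Hn]. apply subst_free in Hf. destruct Hf as [[Hf Hne]|Hf].
    + split; auto. unfold dom in *; simpl. intros [E|E]; [congruence|auto].
    + exfalso. apply (Hc x V (or_introl eq_refl) y). auto.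
Qed.

Lemma app_closed e M : closedT M -> app e M = M.
Proof.
  revert M; induction e as [|[x V] e IH]; simpl; intros M H; auto.
  rewrite subst_closed_id; auto; apply H.
Qed.

Lemma app_wf e M : (forall x V, In (x, V) e -> s_wf V) -> s_wf M -> s_wf (app e M).
Proof.
  revert M; induction e as [|[x V] e IH]; simpl; intros M H1 H2; auto.
  apply IH; eauto. apply subst_wf; eauto.
Qed.

Lemma app_guarded e M : (forall x V, In (x, V) e -> s_guarded V /\ closedT V) -> s_guarded M -> s_guarded (app e M).
Proof.
  revert M; induction e as [|[x V] e IH]; simpl; intros M H1 H2; auto.
  apply IH; eauto. destruct (H1 x V); auto. apply subst_guarded; auto.
Qed.

Lemma cdual_ext T : forall e1 e2, (forall M, app e1 M = app e2 M) -> cdual e1 T = cdual e2 T.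
Proof.
  induction T using sind; intros e1 e2 He; simpl; try (f_equal; auto; fail).
  - f_equal. apply map_ext_in. rewrite Forall_forall in H. intros [l b] Hin. simpl. f_equal. apply (H (l,b) Hin). auto.
  - f_equal. apply map_ext_in. rewrite Forall_forall in H. intros [l b] Hin. simpl. f_equal. apply (H (l,b) Hin). auto.
  - f_equal. rewrite He. apply IHT. intros M. simpl. rewrite He. auto.
Qed.

Lemma cdual_agree T : forall e1 e2, vals_closed e1 -> vals_closed e2 ->
  (forall z, s_free z T -> In z (dom e1)) -> (forall z, s_free z T -> In z (dom e2)) ->
  (forall M, (forall z, s_free z M -> s_free z T) -> app e1 M = app e2 M) ->
  cdual e1 T = cdual e2 T.
Proof.
  induction T using sind; intros e1 e2 C1 C2 D1 D2 Ag; cbn [cdual].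
  - auto.
  - f_equal. apply IHT; auto.
  - f_equal. apply IHT; auto.
  - f_equal.
    + apply Ag. intros z Hz. simpl. auto.
    + apply IHT2; auto.
      * intros z Hz. apply D1. simpl. auto.
      * intros z Hz. apply D2. simpl. auto.
      * intros M0 HM0. apply Ag. intros z Hz. simpl. right. auto.
  - f_equal.
    + apply Ag. intros z Hz. simpl. auto.
    + apply IHT2; auto.
      * intros z Hz. apply D1. simpl. auto.
      * intros z Hz. apply D2. simpl. auto.
      * intros M0 HM0. apply Ag. intros z Hz. simpl. right. auto.
  - f_equal. apply map_ext_in. rewrite Forall_forall in H. intros [l b] Hin. simpl. f_equal.
    assert (Hf : forall z, s_free z b -> s_free z (SBra ls)) by (intros; apply free_bra; eauto).
    apply (H (l,b) Hin); auto.
  - f_equal. apply map_ext_in. rewrite Forall_forall in H. intros [l b] Hin. simpl. f_equal.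
    assert (Hf : forall z, s_free z b -> s_free z (SSel ls)) by (intros; apply free_sel; eauto).
    apply (H (l,b) Hin); auto.
  - assert (EZ : app e1 (SMu x T) = app e2 (SMu x T)) by (apply Ag; auto).
    assert (CZ : closedT (app e1 (SMu x T))).
    { intros y Hy. apply app_free in Hy; auto. destruct Hy as [Hy Hn]. apply Hn. apply D1. auto. }
    rewrite <- EZ. f_equal. apply IHT.
    + apply vals_closed_cons; auto.
    + apply vals_closed_cons; auto.
    + intros z Hz. simpl. destruct (Nat.eq_dec x z); auto. right. apply D1. simpl. auto.
    + intros z Hz. simpl. destruct (Nat.eq_dec x z); auto. right. apply D2. simpl. auto.
    + intros M HM. simpl. apply Ag. intros z Hz. apply subst_free in Hz.
      destruct Hz as [[Hz Hne]|Hz].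
      * simpl. split; auto.
      * exfalso. eapply CZ; eauto.
  - auto.
Qed.

Lemma cdual_closed V e1 e2 : closedT V -> vals_closed e1 -> vals_closed e2 -> cdual e1 V = cdual e2 V.
Proof.
  intros HV C1 C2. apply cdual_agree; auto.
  - intros z Hz. exfalso. eapply HV; eauto.
  - intros z Hz. exfalso. eapply HV; eauto.
  - intros M HM. assert (closedT M) by (intros z Hz; eapply HV; eauto). rewrite !app_closed; auto.
Qed.

Lemma nofree_subst_self x Z M : ~ s_free x Z -> ~ s_free x (s_subst x Z M).
Proof. intros H Hf. apply subst_free in Hf. destruct Hf as [[_ ?]|?]; auto. Qed.

Lemma subst_swap x y V Z M : closedT V -> closedT Z -> x <> y ->
  s_subst x V (s_subst y Z M) = s_subst y Z (s_subst x V M).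
Proof.
  intros HV HZ Hxy. induction M using sind; cbn [s_subst]; try (f_equal; auto; fail).
  - f_equal. rewrite !map_map. apply map_ext_in. rewrite Forall_forall in H.
    intros [l b] Hin. simpl. f_equal. apply (H (l,b) Hin).
  - f_equal. rewrite !map_map. apply map_ext_in. rewrite Forall_forall in H.
    intros [l b] Hin. simpl. f_equal. apply (H (l,b) Hin).
  - simpl. destruct (Nat.eqb_spec y x0) as [E1|E1]; destruct (Nat.eqb_spec x x0) as [E2|E2]; subst; try congruence; simpl.
    + repeat (match goal with |- context [?a =? ?b] => destruct (Nat.eqb_spec a b) end); subst; try congruence; simpl; auto; try (f_equal; auto; fail); try (rewrite subst_closed_id; auto; fail).
    + repeat (match goal with |- context [?a =? ?b] => destruct (Nat.eqb_spec a b) end); subst; try congruence; simpl; auto; try (f_equal; auto; fail); try (rewrite subst_closed_id; auto; fail).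
    + repeat (match goal with |- context [?a =? ?b] => destruct (Nat.eqb_spec a b) end); subst; try congruence; simpl; auto; try (f_equal; auto; fail); try (rewrite subst_closed_id; auto; fail).
  - simpl. destruct (Nat.eqb_spec y x0) as [E1|E1]; destruct (Nat.eqb_spec x x0) as [E2|E2]; subst; try congruence; simpl.
    + repeat (match goal with |- context [?a =? ?b] => destruct (Nat.eqb_spec a b) end); subst; try congruence; simpl; auto; try (f_equal; auto; fail); try (rewrite subst_closed_id; auto; fail).
    + repeat (match goal with |- context [?a =? ?b] => destruct (Nat.eqb_spec a b) end); subst; try congruence; simpl; auto; try (f_equal; auto; fail); try (rewrite subst_closed_id; auto; fail).
    + repeat (match goal with |- context [?a =? ?b] => destruct (Nat.eqb_spec a b) end); subst; try congruence; simpl; auto; try (f_equal; auto; fail); try (rewrite subst_closed_id; auto; fail).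
Qed.


Lemma cdual_unfold x V : closedT V -> forall U e, vals_closed e ->
  (forall z, s_free z U -> z = x \/ In z (dom e)) ->
  s_subst x (cdual e V) (cdual ((x, V) :: e) U) = cdual e (s_subst x V U).
Proof.
  intros HV U. induction U using sind; intros e Ce Fr.
  - reflexivity.
  - cbn [cdual s_subst]. f_equal. apply IHU; auto.
  - cbn [cdual s_subst]. f_equal. apply IHU; auto.
  - cbn [cdual s_subst app]. f_equal.
    + apply subst_closed_id. intro Hf. apply app_free in Hf; auto. destruct Hf as [Hf _].
      eapply subst_closed_nofree; eauto.
    + apply IHU2; auto. intros z Hz. apply Fr. simpl. auto.
  - cbn [cdual s_subst app]. f_equal.
    + apply subst_closed_id. intro Hf. apply app_free in Hf; auto. destruct Hf as [Hf _].
      eapply subst_closed_nofree; eauto.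
    + apply IHU2; auto. intros z Hz. apply Fr. simpl. auto.
  - cbn [cdual s_subst]. f_equal. rewrite !map_map. apply map_ext_in. rewrite Forall_forall in H.
    intros [l b] Hin. simpl. f_equal. apply (H (l,b) Hin); auto.
    intros z Hz. apply Fr. apply free_bra. eauto.
  - cbn [cdual s_subst]. f_equal. rewrite !map_map. apply map_ext_in. rewrite Forall_forall in H.
    intros [l b] Hin. simpl. f_equal. apply (H (l,b) Hin); auto.
    intros z Hz. apply Fr. apply free_sel. eauto.
  - destruct (Nat.eqb_spec x x0) as [E|E].
    + subst x0. cbn [cdual app]. cbn [s_subst]. rewrite !Nat.eqb_refl. cbn [cdual].
      f_equal. apply cdual_ext. intros M. cbn [app]. f_equal.
      apply subst_closed_id. apply nofree_subst_self. intro Hf. apply app_free in Hf; auto.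
      destruct Hf as [Hf _]. simpl in Hf. tauto.
    + cbn [cdual app s_subst]. rewrite !(proj2 (Nat.eqb_neq x x0)) by auto. cbn [cdual].
      f_equal.
      set (Z1 := app e (SMu x0 (s_subst x V U))).
      assert (CZ1 : closedT Z1).
      { intros z Hz. apply app_free in Hz; auto. destruct Hz as [Hz Hn]. simpl in Hz. destruct Hz as [Hz1 Hz2].
        apply subst_free in Hz2. destruct Hz2 as [[Hz2 Hz3]|Hz2].
        - destruct (Fr z) as [?|?]; [simpl; auto|congruence|auto].
        - eapply HV; eauto. }
      rewrite (cdual_ext U ((x0, Z1) :: (x, V) :: e) ((x, V) :: (x0, Z1) :: e)).
      2:{ intros M. cbn [app]. f_equal. apply subst_swap; auto. }
      rewrite (cdual_closed V e ((x0, Z1) :: e)); auto. 2: apply vals_closed_cons; auto.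
      apply IHU. { apply vals_closed_cons; auto. }
      intros z Hz. destruct (Nat.eq_dec z x0) as [->|Hne]. { right. simpl. auto. }
      destruct (Fr z) as [?|?]; [simpl; auto|auto|right; simpl; auto].
  - cbn [cdual s_subst]. destruct (Nat.eqb_spec x x0); simpl; auto.
Qed.


Lemma cdual_unguarded y T : forall e, s_unguarded y (cdual e T) -> s_unguarded y T.
Proof. induction T; simpl; intros; eauto. destruct H. split; eauto. Qed.

Lemma cdual_props T : forall e, (forall x V, In (x, V) e -> ST V) ->
  (forall z, s_free z T -> In z (dom e)) -> s_wf T -> s_guarded T ->
  s_wf (cdual e T) /\ s_guarded (cdual e T) /\ (forall z, s_free z (cdual e T) -> s_free z T).
Proof.
  induction T using sind; intros e He Fr Wf Gd.
  - simpl; auto.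
  - simpl in *. destruct (IHT e) as (?&?&?); auto.
  - simpl in *. destruct (IHT e) as (?&?&?); auto.
  - assert (Cl : vals_closed e) by (intros x V Hin; exact (proj2 (proj2 (He x V Hin)))).
    simpl in Wf, Gd. destruct (IHT2 e) as (A&B&C); auto; try tauto.
    { intros z Hz. apply Fr. simpl. auto. }
    cbn [cdual]. split; [|split].
    + simpl. split; auto. apply app_wf; [|tauto]. intros x V Hin. exact (proj1 (He x V Hin)).
    + simpl. split; auto. apply app_guarded; [|tauto]. intros x V Hin. exact (conj (proj1 (proj2 (He x V Hin))) (proj2 (proj2 (He x V Hin)))).
    + intros z Hz. simpl in Hz |- *. destruct Hz as [Hz|Hz]; auto.
      apply app_free in Hz; tauto.
  - assert (Cl : vals_closed e) by (intros x V Hin; exact (proj2 (proj2 (He x V Hin)))).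
    simpl in Wf, Gd. destruct (IHT2 e) as (A&B&C); auto; try tauto.
    { intros z Hz. apply Fr. simpl. auto. }
    cbn [cdual]. split; [|split].
    + simpl. split; auto. apply app_wf; [|tauto]. intros x V Hin. exact (proj1 (He x V Hin)).
    + simpl. split; auto. apply app_guarded; [|tauto]. intros x V Hin. exact (conj (proj1 (proj2 (He x V Hin))) (proj2 (proj2 (He x V Hin)))).
    + intros z Hz. simpl in Hz |- *. destruct Hz as [Hz|Hz]; auto.
      apply app_free in Hz; tauto.
  - rewrite Forall_forall in H. rewrite wf_bra in Wf. rewrite guarded_bra in Gd.
    assert (IH : forall l b, In (l, b) ls -> s_wf (cdual e b) /\ s_guarded (cdual e b) /\
       (forall z, s_free z (cdual e b) -> s_free z b)).
    { intros l b Hin. apply (H (l, b) Hin).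
      - exact He. - intros z Hz. apply Fr. apply free_bra. eauto.
      - exact (proj2 (proj2 Wf) l b Hin). - exact (Gd l b Hin). }
    cbn [cdual]. split; [|split].
    + apply wf_sel. destruct Wf as (A&B&C). split; [|split].
      * destruct ls; simpl; congruence.
      * rewrite map_fst_mapsnd. auto.
      * intros l c Hin. apply in_mapsnd in Hin. destruct Hin as (b&Hin&->). apply (IH l b Hin).
    + apply guarded_sel. intros l c Hin. apply in_mapsnd in Hin. destruct Hin as (b&Hin&->). apply (IH l b Hin).
    + intros z Hz. apply free_sel in Hz. destruct Hz as (l&c&Hin&Hz). apply in_mapsnd in Hin.
      destruct Hin as (b&Hin&->). apply free_bra. exists l, b. split; auto. apply (IH l b Hin). auto.
  - rewrite Forall_forall in H. rewrite wf_sel in Wf. rewrite guarded_sel in Gd.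
    assert (IH : forall l b, In (l, b) ls -> s_wf (cdual e b) /\ s_guarded (cdual e b) /\
       (forall z, s_free z (cdual e b) -> s_free z b)).
    { intros l b Hin. apply (H (l, b) Hin).
      - exact He. - intros z Hz. apply Fr. apply free_sel. eauto.
      - exact (proj2 (proj2 Wf) l b Hin). - exact (Gd l b Hin). }
    cbn [cdual]. split; [|split].
    + apply wf_bra. destruct Wf as (A&B&C). split; [|split].
      * destruct ls; simpl; congruence.
      * rewrite map_fst_mapsnd. auto.
      * intros l c Hin. apply in_mapsnd in Hin. destruct Hin as (b&Hin&->). apply (IH l b Hin).
    + apply guarded_bra. intros l c Hin. apply in_mapsnd in Hin. destruct Hin as (b&Hin&->). apply (IH l b Hin).
    + intros z Hz. apply free_bra in Hz. destruct Hz as (l&c&Hin&Hz). apply in_mapsnd in Hin.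
      destruct Hin as (b&Hin&->). apply free_sel. exists l, b. split; auto. apply (IH l b Hin). auto.
  - assert (Cl : vals_closed e) by (intros y V Hin; exact (proj2 (proj2 (He y V Hin)))).
    set (Z := app e (SMu x T)).
    assert (SZ : ST Z).
    { split; [|split].
      - apply app_wf; auto. intros y V Hin. exact (proj1 (He y V Hin)).
      - apply app_guarded; auto. intros y V Hin. exact (conj (proj1 (proj2 (He y V Hin))) (proj2 (proj2 (He y V Hin)))).
      - intros z Hz. apply app_free in Hz; auto. destruct Hz as [Hz Hn]. apply Hn. apply Fr. auto. }
    simpl in Wf, Gd. destruct (IHT ((x, Z) :: e)) as (A&B&C); auto; try tauto.
    { intros y V [E|E]. - inversion E; subst; auto. - eauto. }
    { intros z Hz. simpl. destruct (Nat.eq_dec x z); auto. right. apply Fr. simpl. auto. }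
    cbn [cdual]. fold Z. split; [|split].
    + simpl. auto.
    + simpl. split; auto. intro Hu. apply cdual_unguarded in Hu. tauto.
    + intros z Hz. simpl in Hz |- *. destruct Hz as [Hz1 Hz2]. auto.
  - simpl. auto.
Qed.

Lemma ST_cdual T : ST T -> ST (cdual [] T).
Proof.
  intros (W&G&C).
  assert (H1 : forall x V, In (x, V) (@nil (nat * stype)) -> ST V) by (intros x V []).
  assert (H2 : forall z, s_free z T -> In z (dom (@nil (nat*stype)))) by (intros z Hz; exfalso; eapply C; eauto).
  destruct (cdual_props T [] H1 H2 W G) as (A&B&D).
  split; [|split]; auto. intros y Hy. apply D in Hy. eapply C; eauto.
Qed.

End Dual.

Section DualComply.
Context {BT L : Type}.
Notation stype := (@stype BT L).
Notation contract := (@contract BT L).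
Implicit Types (ls : list (L * stype)) (T U V : stype).

Lemma nodup_in {A B : Type} (ls : list (A * B)) l a b :
  NoDup (map fst ls) -> In (l, a) ls -> In (l, b) ls -> a = b.
Proof.
  induction ls as [|[l' c] r IH]; simpl; intros Hn Ha Hb; [contradiction|].
  inversion Hn; subst. destruct Ha as [Ea|Ea]; destruct Hb as [Eb|Eb].
  - inversion Ea; inversion Eb; subst; auto.
  - inversion Ea; subst. exfalso. apply H1. change l with (fst (l, b)). apply in_map. auto.
  - inversion Eb; subst. exfalso. apply H1. change l with (fst (l, a)). apply in_map. auto.
  - auto.
Qed.

Inductive sstar : stype -> stype -> Prop :=
| ss_refl : forall T, sstar T T
| ss_step : forall x t U, sstar (s_subst x (SMu x t) t) U -> sstar (SMu x t) U.

Lemma sstar_snoc T0 x t : sstar T0 (SMu x t) -> sstar T0 (s_subst x (SMu x t) t).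
Proof.
  remember (SMu x t) as m. induction 1; subst.
  - constructor. constructor.
  - constructor. auto.
Qed.

Lemma sstar_ST T0 T : sstar T0 T -> ST T0 -> ST T.
Proof. induction 1; auto. intros. apply IHsstar. apply ST_step. auto. Qed.

Lemma sstar_det T0 Ta Tb : sstar T0 Ta -> sstar T0 Tb -> not_mu Ta -> not_mu Tb -> Ta = Tb.
Proof.
  intros H; revert Tb; induction H; intros Tb H2 Na Nb.
  - inversion H2; subst; auto. simpl in Na. contradiction.
  - inversion H2; subst. + simpl in Nb. contradiction. + auto.
Qed.

Lemma unfolds_sstar T U : unfolds T U -> sstar T U.
Proof. induction 1; constructor; auto. Qed.

Definition cl T : contract := Mmap (cdual [] T).

Lemma cl_mu_step x t r : ST (SMu x t) -> ctau (cl (SMu x t)) r -> r = cl (s_subst x (SMu x t) t).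
Proof.
  intros HS Ht. unfold cl in Ht. cbn [cdual Mmap app] in Ht. inversion Ht; subst.
  change (CMu x (Mmap (cdual [(x, SMu x t)] t))) with (Mmap (SMu x (cdual [(x, SMu x t)] t))).
  rewrite <- M_subst. unfold cl. f_equal.
  change (SMu x (cdual [(x, SMu x t)] t)) with (cdual [] (SMu x t)).
  apply cdual_unfold.
  - destruct HS as (_&_&C). intros y. apply C.
  - intros y V [].
  - intros z Hz. destruct (Nat.eq_dec z x); auto. exfalso. destruct HS as (_&_&C). apply (C z). simpl. auto.
Qed.

Lemma M_mu_step x (t : stype) r : ctau (Mmap (SMu x t)) r -> r = Mmap (s_subst x (SMu x t) t).
Proof. intros Ht. simpl in Ht. inversion Ht; subst. rewrite M_subst. reflexivity. Qed.

Lemma cl_bra ls : cl (SBra ls) = CInt (map (fun p => (fst p, cl (snd p))) ls).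
Proof. unfold cl. simpl. f_equal. rewrite map_map. reflexivity. Qed.
Lemma cl_sel ls : cl (SSel ls) = CExt (map (fun p => (fst p, cl (snd p))) ls).
Proof. unfold cl. simpl. f_equal. rewrite map_map. reflexivity. Qed.

Lemma ST_inB t U : ST (SInB t U) -> ST U.
Proof. intros (W&G&C). split; [|split]; simpl in *; auto. Qed.
Lemma ST_outB t U : ST (SOutB t U) -> ST U.
Proof. intros (W&G&C). split; [|split]; simpl in *; auto. Qed.
Lemma ST_inS M U : ST (SInS M U) -> ST M /\ ST U.
Proof. intros (W&G&C). simpl in *. split; (split; [|split]); try tauto; intros y Hy; apply (C y); simpl; auto. Qed.
Lemma ST_outS M U : ST (SOutS M U) -> ST M /\ ST U.
Proof. intros (W&G&C). simpl in *. split; (split; [|split]); try tauto; intros y Hy; apply (C y); simpl; auto. Qed.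
Lemma ST_bra ls : ST (SBra ls) -> ls <> [] /\ NoDup (map fst ls) /\ forall l T, In (l, T) ls -> ST T.
Proof.
  intros (W&G&C). rewrite wf_bra in W. rewrite guarded_bra in G. destruct W as (A&B&D).
  split; [|split]; auto. intros l T Hin. split; [|split]; eauto.
  intros y Hy. apply (C y). apply free_bra. eauto.
Qed.
Lemma ST_sel ls : ST (SSel ls) -> ls <> [] /\ NoDup (map fst ls) /\ forall l T, In (l, T) ls -> ST T.
Proof.
  intros (W&G&C). rewrite wf_sel in W. rewrite guarded_sel in G. destruct W as (A&B&D).
  split; [|split]; auto. intros l T Hin. split; [|split]; eauto.
  intros y Hy. apply (C y). apply free_sel. eauto.
Qed.

End DualComply.

Section DualComply2.
Context {BT L : Type}.
Notation stype := (@stype BT L).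
Notation contract := (@contract BT L).
Implicit Types (ls : list (L * stype)) (T U V : stype) (cs : list (L * contract)).

Lemma cstep_int_inv cs (a : @act BT L) r : cstep (CInt cs) a r -> exists l, cs = [(l, r)] /\ a = AOutL l.
Proof. intros H. inversion H; subst. eauto. Qed.
Lemma cstep_ext_inv cs (a : @act BT L) r : cstep (CExt cs) a r -> exists l, In (l, r) cs /\ a = AInL l.
Proof. intros H. inversion H; subst. eauto. Qed.
Lemma ctau_int_inv cs (r : contract) : ctau (CInt cs) r -> exists l s, 1 < length cs /\ In (l, s) cs /\ r = CInt [(l, s)].
Proof. intros H. inversion H; subst. eauto. Qed.
Lemma ctau_ext_inv cs (r : contract) : ~ ctau (CExt cs) r.
Proof. intros H. inversion H. Qed.

Variable leb : BT -> BT -> Prop.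
Variable Bc : contract -> contract -> Prop.
Hypothesis leb_refl : forall t, leb t t.
Hypothesis Bc_refl : forall s, SC s -> Bc s s.
Notation ptau := (ptau leb Bc).

Definition DR (r s : contract) : Prop :=
  (exists T0 Ta Tb, ST T0 /\ sstar T0 Ta /\ sstar T0 Tb /\ r = cl Ta /\ s = Mmap Tb)
  \/ (exists T0 Tb ls l Ti, ST T0 /\ sstar T0 (SBra ls) /\ sstar T0 Tb /\ In (l, Ti) ls /\
        r = CInt [(l, cl Ti)] /\ s = Mmap Tb)
  \/ (exists T0 Ta ls l Ti, ST T0 /\ sstar T0 (SSel ls) /\ sstar T0 Ta /\ In (l, Ti) ls /\
        r = cl Ta /\ s = CInt [(l, Mmap Ti)]).

Lemma DR_base T : ST T -> DR (cl T) (Mmap T).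
Proof. intros. left. exists T, T, T. split; [auto|split; [constructor|split; [constructor|split; reflexivity]]]. Qed.

Ltac ctau_absurd := match goal with
  | H : ctau COne _ |- _ => inversion H
  | H : ctau (CInB _ _) _ |- _ => inversion H
  | H : ctau (COutB _ _) _ |- _ => inversion H
  | H : ctau (CInC _ _) _ |- _ => inversion H
  | H : ctau (COutC _ _) _ |- _ => inversion H
  | H : ctau (CExt _) _ |- _ => inversion H
  | H : ctau (CVar _) _ |- _ => inversion H
  | H : cstep COne _ _ |- _ => inversion H
  | H : cstep (CMu _ _) _ _ |- _ => inversion H
  | H : cstep (CVar _) _ _ |- _ => inversion H
  end.

Lemma DR_nonmu T : ST T -> not_mu T ->
  ((ticks (cl T) /\ ticks (Mmap T) /\ forall r' s', ~ ptau (cl T) (Mmap T) r' s') \/ exists r' s', ptau (cl T) (Mmap T) r' s') /\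
  (forall r' s', ptau (cl T) (Mmap T) r' s' -> DR r' s').
Proof.
  intros HT NM. destruct T as [|t U|t U|Mg U|Mg U|ls|ls|x U|x].
  - unfold cl; simpl. split.
    + left. split; [reflexivity|split; [reflexivity|]]. intros r' s' Hp. inversion Hp; subst; ctau_absurd.
    + intros r' s' Hp. exfalso. inversion Hp; subst; ctau_absurd.
  - unfold cl; simpl. pose proof (ST_inB _ _ HT) as HU. split.
    + right. do 2 eexists. eapply pt_sync; [constructor|constructor|]. simpl. apply leb_refl.
    + intros r' s' Hp. inversion Hp; subst; try ctau_absurd.
      match goal with H1 : cstep (COutB _ _) _ _, H2 : cstep (CInB _ _) _ _ |- _ => inversion H1; inversion H2; subst end.
      apply DR_base; auto.
  - unfold cl; simpl. pose proof (ST_outB _ _ HT) as HU. split.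
    + right. do 2 eexists. eapply pt_sync; [constructor|constructor|]. simpl. apply leb_refl.
    + intros r' s' Hp. inversion Hp; subst; try ctau_absurd.
      match goal with H1 : cstep (CInB _ _) _ _, H2 : cstep (COutB _ _) _ _ |- _ => inversion H1; inversion H2; subst end.
      apply DR_base; auto.
  - unfold cl; simpl. destruct (ST_inS _ _ HT) as [HM HU]. split.
    + right. do 2 eexists. eapply pt_sync; [constructor|constructor|]. simpl. apply Bc_refl. apply M_SC. auto.
    + intros r' s' Hp. inversion Hp; subst; try ctau_absurd.
      match goal with H1 : cstep (COutC _ _) _ _, H2 : cstep (CInC _ _) _ _ |- _ => inversion H1; inversion H2; subst end.
      apply DR_base; auto.
  - unfold cl; simpl. destruct (ST_outS _ _ HT) as [HM HU]. split.
    + right. do 2 eexists. eapply pt_sync; [constructor|constructor|]. simpl. apply Bc_refl. apply M_SC. auto.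
    + intros r' s' Hp. inversion Hp; subst; try ctau_absurd.
      match goal with H1 : cstep (CInC _ _) _ _, H2 : cstep (COutC _ _) _ _ |- _ => inversion H1; inversion H2; subst end.
      apply DR_base; auto.
  - rewrite cl_bra. destruct (ST_bra _ HT) as (Hne&Hnd&Hc). split.
    + right. destruct ls as [|[l Ti] [|q rest]]; [congruence| |].
      * do 2 eexists. eapply pt_sync; [simpl; apply cs_outL|apply cs_ext; simpl; left; reflexivity|]. simpl. reflexivity.
      * do 2 eexists. apply pt_l. apply ct_int with (l := l) (s := cl Ti). { simpl. lia. } simpl. auto.
    + intros r' s' Hp. simpl in Hp. inversion Hp; subst.
      * match goal with H : ctau (CInt _) _ |- _ => apply ctau_int_inv in H; destruct H as (l&c&_&Hin&->) end.
        apply in_mapsnd in Hin. destruct Hin as (Ti&Hin&->).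
        right; left. exists (SBra ls), (SBra ls), ls, l, Ti. split; [auto|split; [constructor|split; [constructor|split; [auto|split; reflexivity]]]].
      * exfalso. match goal with H : ctau (CExt _) _ |- _ => eapply ctau_ext_inv; exact H end.
      * match goal with H : cstep (CInt _) _ _, H0 : cstep (CExt _) _ _, H1 : compat _ _ _ _ |- _ =>
          rename H into Hs1; rename H0 into Hs2; rename H1 into Hcp end.
        apply cstep_int_inv in Hs1. destruct Hs1 as (l&E&->).
        apply cstep_ext_inv in Hs2. destruct Hs2 as (l'&Hin'&->).
        simpl in Hcp. subst l'.
        assert (Hin : In (l, r') (map (fun p => (fst p, cl (snd p))) ls)) by (rewrite E; simpl; auto).
        apply in_mapsnd in Hin. destruct Hin as (Ti&Hin&->).
        apply in_mapsnd in Hin'. destruct Hin' as (Ti'&Hin'&->).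
        rewrite (nodup_in ls l Ti' Ti) by auto. apply DR_base. eauto.
  - rewrite cl_sel. destruct (ST_sel _ HT) as (Hne&Hnd&Hc). split.
    + right. destruct ls as [|[l Ti] [|q rest]]; [congruence| |].
      * do 2 eexists. eapply pt_sync; [apply cs_ext; simpl; left; reflexivity|simpl; apply cs_outL|]. simpl. reflexivity.
      * do 2 eexists. apply pt_r. simpl. apply ct_int with (l := l) (s := Mmap Ti). { simpl. lia. } simpl. auto.
    + intros r' s' Hp. simpl in Hp. inversion Hp; subst.
      * exfalso. match goal with H : ctau (CExt _) _ |- _ => eapply ctau_ext_inv; exact H end.
      * match goal with H : ctau (CInt _) _ |- _ => apply ctau_int_inv in H; destruct H as (l&c&_&Hin&->) end.
        apply in_mapsnd in Hin. destruct Hin as (Ti&Hin&->).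
        right; right. exists (SSel ls), (SSel ls), ls, l, Ti. rewrite cl_sel. split; [auto|split; [constructor|split; [constructor|split; [auto|split; reflexivity]]]].
      * match goal with H : cstep (CExt _) _ _, H0 : cstep (CInt _) _ _, H1 : compat _ _ _ _ |- _ =>
          rename H into Hs1; rename H0 into Hs2; rename H1 into Hcp end.
        apply cstep_int_inv in Hs2. destruct Hs2 as (l&E&->).
        apply cstep_ext_inv in Hs1. destruct Hs1 as (l'&Hin'&->).
        simpl in Hcp. subst l'.
        assert (Hin : In (l, s') (map (fun p => (fst p, Mmap (snd p))) ls)) by (rewrite E; simpl; auto).
        apply in_mapsnd in Hin. destruct Hin as (Ti&Hin&->).
        apply in_mapsnd in Hin'. destruct Hin' as (Ti'&Hin'&->).
        rewrite (nodup_in ls l Ti' Ti) by auto. apply DR_base. eauto.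
  - simpl in NM. contradiction.
  - exfalso. destruct HT as (_&_&C). apply (C x). simpl. auto.
Qed.


Lemma E1_nonmu ls l Ti : ST (SBra ls) -> In (l, Ti) ls ->
  (exists r' s', ptau (CInt [(l, cl Ti)]) (Mmap (SBra ls)) r' s') /\
  (forall r' s', ptau (CInt [(l, cl Ti)]) (Mmap (SBra ls)) r' s' -> DR r' s').
Proof.
  intros HT Hin. destruct (ST_bra _ HT) as (Hne&Hnd&Hc). simpl. split.
  - do 2 eexists. eapply pt_sync; [apply cs_outL|apply cs_ext; apply in_mapsnd; eauto|]. simpl. reflexivity.
  - intros r' s' Hp. inversion Hp; subst.
    + exfalso. match goal with H : ctau (CInt _) _ |- _ => apply ctau_int_inv in H; destruct H as (?&?&Hl&_) end.
      simpl in Hl. lia.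
    + exfalso. match goal with H : ctau (CExt _) _ |- _ => eapply ctau_ext_inv; exact H end.
    + match goal with H : cstep (CInt _) _ _, H0 : cstep (CExt _) _ _, H1 : compat _ _ _ _ |- _ =>
          rename H into Hs1; rename H0 into Hs2; rename H1 into Hcp end.
      apply cstep_int_inv in Hs1. destruct Hs1 as (l0&E&->). injection E as E1 E2. subst.
      apply cstep_ext_inv in Hs2. destruct Hs2 as (l'&Hin'&->). simpl in Hcp. subst l'.
      apply in_mapsnd in Hin'. destruct Hin' as (Ti'&Hin'&->).
      assert (Ti' = Ti) by (eapply nodup_in; eauto). subst. apply DR_base. eauto.
Qed.

Lemma E2_nonmu ls l Ti : ST (SSel ls) -> In (l, Ti) ls ->
  (exists r' s', ptau (cl (SSel ls)) (CInt [(l, Mmap Ti)]) r' s') /\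
  (forall r' s', ptau (cl (SSel ls)) (CInt [(l, Mmap Ti)]) r' s' -> DR r' s').
Proof.
  intros HT Hin. destruct (ST_sel _ HT) as (Hne&Hnd&Hc). rewrite cl_sel. split.
  - do 2 eexists. eapply pt_sync; [apply cs_ext; apply in_mapsnd; eauto|apply cs_outL|]. simpl. reflexivity.
  - intros r' s' Hp. inversion Hp; subst.
    + exfalso. match goal with H : ctau (CExt _) _ |- _ => eapply ctau_ext_inv; exact H end.
    + exfalso. match goal with H : ctau (CInt _) _ |- _ => apply ctau_int_inv in H; destruct H as (?&?&Hl&_) end.
      simpl in Hl. lia.
    + match goal with H : cstep (CExt _) _ _, H0 : cstep (CInt _) _ _, H1 : compat _ _ _ _ |- _ =>
          rename H into Hs1; rename H0 into Hs2; rename H1 into Hcp end.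
      apply cstep_int_inv in Hs2. destruct Hs2 as (l0&E&->). injection E as E1 E2. subst.
      apply cstep_ext_inv in Hs1. destruct Hs1 as (l'&Hin'&->). simpl in Hcp. subst l'.
      apply in_mapsnd in Hin'. destruct Hin' as (Ti'&Hin'&->).
      assert (Ti' = Ti) by (eapply nodup_in; eauto). subst. apply DR_base. eauto.
Qed.

Lemma mu_or_not T : (exists x t, T = SMu x t) \/ not_mu T.
Proof. destruct T; simpl; eauto. Qed.

Lemma ctau_M_nonmu T s' : not_mu T -> ctau (Mmap T) s' ->
  exists ls l Ti, T = SSel ls /\ In (l, Ti) ls /\ s' = CInt [(l, Mmap Ti)].
Proof.
  intros NM H. destruct T; simpl in H; try (inversion H; fail).
  - apply ctau_int_inv in H. destruct H as (l0&c&_&Hin&->). apply in_mapsnd in Hin.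
    destruct Hin as (Ti&Hin&->). do 3 eexists; split; [reflexivity|split; [eassumption|reflexivity]].
  - simpl in NM. contradiction.
Qed.

Lemma ctau_cl_nonmu T r' : not_mu T -> ctau (cl T) r' ->
  exists ls l Ti, T = SBra ls /\ In (l, Ti) ls /\ r' = CInt [(l, cl Ti)].
Proof.
  intros NM H. destruct T; try (unfold cl in H; simpl in H; inversion H; fail).
  - rewrite cl_bra in H. apply ctau_int_inv in H. destruct H as (l0&c&_&Hin&->). apply in_mapsnd in Hin.
    destruct Hin as (Ti&Hin&->). do 3 eexists; split; [reflexivity|split; [eassumption|reflexivity]].
  - simpl in NM. contradiction.
Qed.

Lemma DR_sim : comply_sim leb Bc DR.
Proof.
  intros r s HD. destruct HD as [(T0&Ta&Tb&H0&Ha&Hb&->&->)|[(T0&Tb&ls&l&Ti&H0&Hs&Hb&Hin&->&->)|(T0&Ta&ls&l&Ti&H0&Hs&Ha&Hin&->&->)]].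
  - destruct (mu_or_not Ta) as [(x&t&->)|NMa].
    + assert (STa : ST (SMu x t)) by (eapply sstar_ST; eauto).
      split.
      * intros Hn. exfalso. eapply Hn. apply pt_l. unfold cl; simpl. constructor.
      * intros r' s' Hp. inversion Hp; subst.
        -- match goal with H : ctau (cl _) _ |- _ => apply cl_mu_step in H; auto; subst end.
           left. exists T0, (s_subst x (SMu x t) t), Tb. split; [auto|split; [apply sstar_snoc; auto|split; auto]].
        -- destruct (mu_or_not Tb) as [(y&u&->)|NMb].
           ++ match goal with H : ctau (Mmap _) _ |- _ => apply M_mu_step in H; subst end.
              left. exists T0, (SMu x t), (s_subst y (SMu y u) u). split; [auto|split; [auto|split; [apply sstar_snoc; auto|auto]]].
           ++ match goal with H : ctau (Mmap _) _ |- _ => apply ctau_M_nonmu in H; auto; destruct H as (ls&l&Ti&->&Hin&->) end.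
              right; right. exists T0, (SMu x t), ls, l, Ti. auto 7.
        -- exfalso. match goal with H : cstep (cl _) _ _ |- _ => unfold cl in H; simpl in H; inversion H end.
    + destruct (mu_or_not Tb) as [(y&u&->)|NMb].
      * split.
        -- intros Hn. exfalso. eapply Hn. apply pt_r. simpl. constructor.
        -- intros r' s' Hp. inversion Hp; subst.
           ++ match goal with H : ctau (cl _) _ |- _ => apply ctau_cl_nonmu in H; auto; destruct H as (ls&l&Ti&->&Hin&->) end.
              right; left. exists T0, (SMu y u), ls, l, Ti. auto 7.
           ++ match goal with H : ctau (Mmap _) _ |- _ => apply M_mu_step in H; subst end.
              left. exists T0, Ta, (s_subst y (SMu y u) u). split; [auto|split; [auto|split; [apply sstar_snoc; auto|auto]]].
           ++ exfalso. match goal with H : cstep (Mmap (SMu _ _)) _ _ |- _ => simpl in H; inversion H end.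
      * assert (E : Ta = Tb) by (eapply sstar_det; eauto). subst Tb.
        assert (STa : ST Ta) by (eapply sstar_ST; eauto).
        destruct (DR_nonmu Ta STa NMa) as [[(t1&t2&Hn)|Hex] Hall].
        -- split; auto.
        -- split; auto. intros Hn. exfalso. destruct Hex as (r'&s'&Hp). eapply Hn; eauto.
  - destruct (mu_or_not Tb) as [(y&u&->)|NMb].
    + split.
      * intros Hn. exfalso. eapply Hn. apply pt_r. simpl. constructor.
      * intros r' s' Hp. inversion Hp; subst.
        -- exfalso. match goal with H : ctau (CInt _) _ |- _ => apply ctau_int_inv in H; destruct H as (?&?&Hl&_) end.
           simpl in Hl. lia.
        -- match goal with H : ctau (Mmap _) _ |- _ => apply M_mu_step in H; subst end.
           right; left. exists T0, (s_subst y (SMu y u) u), ls, l, Ti. split; [auto|split; [auto|split; [apply sstar_snoc; auto|auto]]].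
        -- exfalso. match goal with H : cstep (Mmap (SMu _ _)) _ _ |- _ => simpl in H; inversion H end.
    + assert (E : SBra ls = Tb) by (eapply sstar_det; eauto; simpl; auto). subst Tb.
      assert (STa : ST (SBra ls)) by (eapply sstar_ST; eauto).
      destruct (E1_nonmu ls l Ti STa Hin) as [Hex Hall]. split; auto.
      intros Hn. exfalso. destruct Hex as (r'&s'&Hp). eapply Hn; eauto.
  - destruct (mu_or_not Ta) as [(y&u&->)|NMa].
    + split.
      * intros Hn. exfalso. eapply Hn. apply pt_l. unfold cl; simpl. constructor.
      * intros r' s' Hp. inversion Hp; subst.
        -- match goal with H : ctau (cl _) _ |- _ => apply cl_mu_step in H; [subst|eapply sstar_ST; eauto] end.
           right; right. exists T0, (s_subst y (SMu y u) u), ls, l, Ti. split; [auto|split; [auto|split; [apply sstar_snoc; auto|auto]]].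
        -- exfalso. match goal with H : ctau (CInt _) _ |- _ => apply ctau_int_inv in H; destruct H as (?&?&Hl&_) end.
           simpl in Hl. lia.
        -- exfalso. match goal with H : cstep (cl _) _ _ |- _ => unfold cl in H; simpl in H; inversion H end.
    + assert (E : SSel ls = Ta) by (eapply sstar_det; eauto; simpl; auto). subst Ta.
      assert (STa : ST (SSel ls)) by (eapply sstar_ST; eauto).
      destruct (E2_nonmu ls l Ti STa Hin) as [Hex Hall]. split; auto.
      intros Hn. exfalso. destruct Hex as (r'&s'&Hp). eapply Hn; eauto.
Qed.

Theorem dual_comply T : ST T -> comply leb Bc (cl T) (Mmap T).
Proof. intros HT. exists DR. split; [apply DR_sim|apply DR_base; auto]. Qed.

End DualComply2.

Section Ceq.
Context {BT L : Type}.
Notation stype := (@stype BT L).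
Notation contract := (@contract BT L).
Implicit Types (ls : list (L * stype)) (T U V : stype) (cs : list (L * contract)) (a b s : contract).
Variable leb : BT -> BT -> Prop.
Hypothesis leb_trans : forall t1 t2 t3, leb t1 t2 -> leb t2 t3 -> leb t1 t3.

Definition ceq_sim (R : contract -> contract -> Prop) : Prop :=
  forall a b, R a b ->
    SC a /\ SC b /\ R b a /\
    (forall x, ~ cunf a (CVar x)) /\
    (cunf a COne -> cunf b COne) /\
    (forall t1 a', cunf a (CInB t1 a') -> exists t2 b', cunf b (CInB t2 b') /\ leb t1 t2 /\ leb t2 t1 /\ R a' b') /\
    (forall t1 a', cunf a (COutB t1 a') -> exists t2 b', cunf b (COutB t2 b') /\ leb t1 t2 /\ leb t2 t1 /\ R a' b') /\
    (forall ac a', cunf a (CInC ac a') -> exists bc b', cunf b (CInC bc b') /\ R ac bc /\ R a' b') /\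
    (forall ac a', cunf a (COutC ac a') -> exists bc b', cunf b (COutC bc b') /\ R ac bc /\ R a' b') /\
    (forall cs, cunf a (CExt cs) -> exists cs', cunf b (CExt cs') /\
        forall l a', In (l, a') cs -> exists b', In (l, b') cs' /\ R a' b') /\
    (forall cs, cunf a (CInt cs) -> exists cs', cunf b (CInt cs') /\
        forall l a', In (l, a') cs -> exists b', In (l, b') cs' /\ R a' b').

Definition ceq a b : Prop := exists R, ceq_sim R /\ R a b.

Lemma ceq_is_sim : ceq_sim ceq.
Proof.
  intros a b (R&HR&Hab). destruct (HR a b Hab) as (S1&S2&Sym&Cv&C1&C2&C3&C4&C5&C6&C7).
  split; [auto|split; [auto|split; [exists R; auto|split; [auto|split; [auto|]]]]].
  split; [|split; [|split; [|split; [|split]]]].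
  - intros t1 a' H. destruct (C2 t1 a' H) as (t2&b'&?&?&?&?). exists t2, b'. repeat split; auto. exists R; auto.
  - intros t1 a' H. destruct (C3 t1 a' H) as (t2&b'&?&?&?&?). exists t2, b'. repeat split; auto. exists R; auto.
  - intros ac a' H. destruct (C4 ac a' H) as (bc&b'&?&?&?). exists bc, b'. repeat split; auto; exists R; auto.
  - intros ac a' H. destruct (C5 ac a' H) as (bc&b'&?&?&?). exists bc, b'. repeat split; auto; exists R; auto.
  - intros cs H. destruct (C6 cs H) as (cs'&?&Hl). exists cs'. split; auto.
    intros l a' Hin. destruct (Hl l a' Hin) as (b'&?&?). exists b'. split; auto. exists R; auto.
  - intros cs H. destruct (C7 cs H) as (cs'&?&Hl). exists cs'. split; auto.
    intros l a' Hin. destruct (Hl l a' Hin) as (b'&?&?). exists b'. split; auto. exists R; auto.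
Qed.

Lemma ceq_sym a b : ceq a b -> ceq b a.
Proof. intros H. apply ceq_is_sim in H. tauto. Qed.

Lemma ceq_SC a b : ceq a b -> SC a /\ SC b.
Proof. intros H. apply ceq_is_sim in H. tauto. Qed.

Lemma ceq_trans a b c : ceq a b -> ceq b c -> ceq a c.
Proof.
  intros Hab Hbc. exists (fun a c => exists b, ceq a b /\ ceq b c). split; [|eauto].
  clear a b c Hab Hbc. intros a c (b&Hab&Hbc).
  destruct (ceq_is_sim a b Hab) as (S1&S2&Sym1&Cv1&C11&C12&C13&C14&C15&C16&C17).
  destruct (ceq_is_sim b c Hbc) as (S3&S4&Sym2&Cv2&C21&C22&C23&C24&C25&C26&C27).
  split; [auto|split; [auto|split; [exists b; split; auto|split; [auto|split; [auto|]]]]].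
  split; [|split; [|split; [|split; [|split]]]].
  - intros t1 a' H. destruct (C12 t1 a' H) as (t2&b'&H2&?&?&?).
    destruct (C22 t2 b' H2) as (t3&c'&?&?&?&?). exists t3, c'. repeat split; eauto.
  - intros t1 a' H. destruct (C13 t1 a' H) as (t2&b'&H2&?&?&?).
    destruct (C23 t2 b' H2) as (t3&c'&?&?&?&?). exists t3, c'. repeat split; eauto.
  - intros ac a' H. destruct (C14 ac a' H) as (bc&b'&H2&?&?).
    destruct (C24 bc b' H2) as (cc&c'&?&?&?). exists cc, c'. repeat split; eauto.
  - intros ac a' H. destruct (C15 ac a' H) as (bc&b'&H2&?&?).
    destruct (C25 bc b' H2) as (cc&c'&?&?&?). exists cc, c'. repeat split; eauto.
  - intros cs H. destruct (C16 cs H) as (cs'&H2&Hl). destruct (C26 cs' H2) as (cs''&H3&Hl2).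
    exists cs''. split; auto. intros l a' Hin. destruct (Hl l a' Hin) as (b'&Hb&?).
    destruct (Hl2 l b' Hb) as (c'&?&?). eauto.
  - intros cs H. destruct (C17 cs H) as (cs'&H2&Hl). destruct (C27 cs' H2) as (cs''&H3&Hl2).
    exists cs''. split; auto. intros l a' Hin. destruct (Hl l a' Hin) as (b'&Hb&?).
    destruct (Hl2 l b' Hb) as (c'&?&?). eauto.
Qed.

Lemma cunf_nonmu_inv s u : c_not_mu s -> cunf s u -> u = s.
Proof. intros N H. inversion H; subst; auto. simpl in N. contradiction. Qed.

Lemma SC_single l a : SC a -> SC (CInt [(l, a)]).
Proof.
  intros (W&G&C). split; [|split].
  - apply cwf_int. split; [congruence|split].
    + simpl. constructor; [simpl; auto|constructor].
    + intros l' c [E|[]]. inversion E; subst; auto.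
  - apply cguarded_int. intros l' c [E|[]]. inversion E; subst; auto.
  - intros y Hy. apply cfree_int in Hy. destruct Hy as (l'&c&[E|[]]&Hy). inversion E; subst. eapply C; eauto.
Qed.

Lemma ceq_single l a b : ceq a b -> ceq (CInt [(l, a)]) (CInt [(l, b)]).
Proof.
  intros Hab. exists (fun x y => ceq x y \/ exists a b, ceq a b /\ x = CInt [(l, a)] /\ y = CInt [(l, b)]).
  split; [|right; eauto]. clear a b Hab.
  intros x y [H|(a&b&Hab&->&->)].
  - destruct (ceq_is_sim x y H) as (S1&S2&Sym&Cv&C1&C2&C3&C4&C5&C6&C7).
    split; [auto|split; [auto|split; [auto|split; [auto|split; [auto|]]]]].
    split; [|split; [|split; [|split; [|split]]]].
    + intros t1 a' Hu. destruct (C2 t1 a' Hu) as (t2&b'&?&?&?&?). exists t2, b'. auto.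
    + intros t1 a' Hu. destruct (C3 t1 a' Hu) as (t2&b'&?&?&?&?). exists t2, b'. auto.
    + intros ac a' Hu. destruct (C4 ac a' Hu) as (bc&b'&?&?&?). exists bc, b'. auto.
    + intros ac a' Hu. destruct (C5 ac a' Hu) as (bc&b'&?&?&?). exists bc, b'. auto.
    + intros cs Hu. destruct (C6 cs Hu) as (cs'&?&Hl). exists cs'. split; auto.
      intros l' a' Hin. destruct (Hl l' a' Hin) as (b'&?&?). eauto.
    + intros cs Hu. destruct (C7 cs Hu) as (cs'&?&Hl). exists cs'. split; auto.
      intros l' a' Hin. destruct (Hl l' a' Hin) as (b'&?&?). eauto.
  - destruct (ceq_SC a b Hab) as [Sa Sb].
    split; [apply SC_single; auto|split; [apply SC_single; auto|split]].
    { right. exists b, a. split; auto. apply ceq_sym; auto. }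
    assert (Hu : forall u, cunf (CInt [(l, a)]) u -> u = CInt [(l, a)]) by (intros u Hu; apply cunf_nonmu_inv in Hu; simpl; auto).
    split; [|split; [|split; [|split; [|split; [|split; [|split]]]]]].
    + intros x' H. apply Hu in H. discriminate.
    + intros H. apply Hu in H. discriminate.
    + intros t1 a' H. apply Hu in H. discriminate.
    + intros t1 a' H. apply Hu in H. discriminate.
    + intros t1 a' H. apply Hu in H. discriminate.
    + intros t1 a' H. apply Hu in H. discriminate.
    + intros cs H. apply Hu in H. discriminate.
    + intros cs H. apply Hu in H. injection H as ->. exists [(l, b)]. split; [apply cunf_other; simpl; auto|].
      intros l' a' [E|[]]. inversion E; subst. exists b. split; simpl; auto.
Qed.

End Ceq.

Section TypesCeq.
Context {BT L : Type}.
Notation stype := (@stype BT L).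
Notation contract := (@contract BT L).
Implicit Types (ls : list (L * stype)) (T U V : stype) (cs : list (L * contract)) (a b s : contract).
Variable leb : BT -> BT -> Prop.
Notation mapM ls := (map (fun p => (fst p, Mmap (snd p))) ls).

Lemma subtype_sim : @sub_sim BT L leb (subtype leb).
Proof.
  intros T S (R&HR&HTS). destruct (HR T S HTS) as (S1&S2&C1&C2&C3&C4&C5&C6&C7).
  split; [auto|split; [auto|split; [auto|]]].
  split; [|split; [|split; [|split; [|split]]]].
  - intros t1 a' H. destruct (C2 t1 a' H) as (t2&b'&?&?&?). exists t2, b'. repeat split; auto. exists R; auto.
  - intros t1 a' H. destruct (C3 t1 a' H) as (t2&b'&?&?&?). exists t2, b'. repeat split; auto. exists R; auto.
  - intros ac a' H. destruct (C4 ac a' H) as (bc&b'&?&?&?). exists bc, b'. repeat split; auto; exists R; auto.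
  - intros ac a' H. destruct (C5 ac a' H) as (bc&b'&?&?&?). exists bc, b'. repeat split; auto; exists R; auto.
  - intros cs H. destruct (C6 cs H) as (cs'&?&Hl). exists cs'. split; auto.
    intros l a' Hin. destruct (Hl l a' Hin) as (b'&?&?). exists b'. split; auto. exists R; auto.
  - intros cs H. destruct (C7 cs H) as (cs'&?&Hl). exists cs'. split; auto.
    intros l a' Hin. destruct (Hl l a' Hin) as (b'&?&?). exists b'. split; auto. exists R; auto.
Qed.

Lemma Mshape_one U : Mmap U = COne -> U = SEnd.
Proof. destruct U; simpl; intros H; inversion H; auto. Qed.
Lemma Mshape_var U x : Mmap U = CVar x -> U = SVar x.
Proof. destruct U; simpl; intros H; inversion H; auto. Qed.
Lemma Mshape_inB U t a : Mmap U = CInB t a -> exists U', U = SInB t U' /\ a = Mmap U'.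
Proof. destruct U; simpl; intros H; inversion H; eauto. Qed.
Lemma Mshape_outB U t a : Mmap U = COutB t a -> exists U', U = SOutB t U' /\ a = Mmap U'.
Proof. destruct U; simpl; intros H; inversion H; eauto. Qed.
Lemma Mshape_inC U c a : Mmap U = CInC c a -> exists M U', U = SInS M U' /\ c = Mmap M /\ a = Mmap U'.
Proof. destruct U; simpl; intros H; inversion H; eauto. Qed.
Lemma Mshape_outC U c a : Mmap U = COutC c a -> exists M U', U = SOutS M U' /\ c = Mmap M /\ a = Mmap U'.
Proof. destruct U; simpl; intros H; inversion H; eauto. Qed.
Lemma Mshape_ext U cs : Mmap U = CExt cs -> exists ls, U = SBra ls /\ cs = mapM ls.
Proof. destruct U; simpl; intros H; inversion H; eauto. Qed.
Lemma Mshape_int U cs : Mmap U = CInt cs -> exists ls, U = SSel ls /\ cs = mapM ls.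
Proof. destruct U; simpl; intros H; inversion H; eauto. Qed.

Definition TRel a b : Prop :=
  exists T1 T2, ST T1 /\ ST T2 /\ sbt_eq leb T1 T2 /\ a = Mmap T1 /\ b = Mmap T2.

Lemma TRel_sim : ceq_sim leb TRel.
Proof.
  intros a b (T1&T2&S1&S2&[F R]&->&->).
  destruct (subtype_sim T1 T2 F) as (_&_&D1&D2&D3&D4&D5&D6&D7).
  destruct (subtype_sim T2 T1 R) as (_&_&E1&E2&E3&E4&E5&E6&E7).
  assert (Mk : forall U1 U2, ST U1 -> ST U2 -> subtype leb U1 U2 -> subtype leb U2 U1 -> TRel (Mmap U1) (Mmap U2))
    by (intros; exists U1, U2; split; [auto|split; [auto|split; [split; auto|split; reflexivity]]]).
  split; [apply M_SC; auto|split; [apply M_SC; auto|split]].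
  { exists T2, T1. split; [auto|split; [auto|split; [split; auto|split; reflexivity]]]. }
  split; [|split; [|split; [|split; [|split; [|split; [|split]]]]]].
  - intros x H. apply M_unfolds in H. destruct H as (U&HU&E). symmetry in E. apply Mshape_var in E. subst.
    apply unfolds_ST in HU; auto. destruct HU as (_&_&C). apply (C x). simpl. auto.
  - intros H. apply M_unfolds in H. destruct H as (U&HU&E). symmetry in E. apply Mshape_one in E. subst.
    apply D1 in HU. apply unfolds_M in HU. exact HU.
  - intros t1 a' H. apply M_unfolds in H. destruct H as (U&HU&E). symmetry in E. apply Mshape_inB in E.
    destruct E as (U1&->&->). destruct (D2 t1 U1 HU) as (t2&U2&H2&Hs12&Hl12).
    destruct (E2 t2 U2 H2) as (t1'&U1'&H1'&Hs21&Hl21).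
    pose proof (unfolds_det _ _ _ HU H1') as Eq. injection Eq as <- <-.
    exists t2, (Mmap U2). split; [apply (unfolds_M _ _ H2)|split; [auto|split; [auto|]]].
    apply Mk; auto.
    + eapply ST_inB. eapply unfolds_ST; eauto.
    + eapply ST_inB. eapply unfolds_ST; eauto.
  - intros t1 a' H. apply M_unfolds in H. destruct H as (U&HU&E). symmetry in E. apply Mshape_outB in E.
    destruct E as (U1&->&->). destruct (D3 t1 U1 HU) as (t2&U2&H2&Hs12&Hl12).
    destruct (E3 t2 U2 H2) as (t1'&U1'&H1'&Hs21&Hl21).
    pose proof (unfolds_det _ _ _ HU H1') as Eq. injection Eq as <- <-.
    exists t2, (Mmap U2). split; [apply (unfolds_M _ _ H2)|split; [auto|split; [auto|]]].
    apply Mk; auto.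
    + eapply ST_outB. eapply unfolds_ST; eauto.
    + eapply ST_outB. eapply unfolds_ST; eauto.
  - intros ac a' H. apply M_unfolds in H. destruct H as (U&HU&E). symmetry in E. apply Mshape_inC in E.
    destruct E as (M1&U1&->&->&->). destruct (D5 M1 U1 HU) as (M2&U2&H2&Hs12&Hm12).
    destruct (E5 M2 U2 H2) as (M1'&U1'&H1'&Hs21&Hm21).
    pose proof (unfolds_det _ _ _ HU H1') as Eq. injection Eq as <- <-.
    pose proof (unfolds_ST _ _ HU S1) as SU1. pose proof (unfolds_ST _ _ H2 S2) as SU2.
    apply ST_inS in SU1. apply ST_inS in SU2.
    exists (Mmap M2), (Mmap U2). split; [apply (unfolds_M _ _ H2)|split; apply Mk; tauto].
  - intros ac a' H. apply M_unfolds in H. destruct H as (U&HU&E). symmetry in E. apply Mshape_outC in E.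
    destruct E as (M1&U1&->&->&->). destruct (D4 M1 U1 HU) as (M2&U2&H2&Hs12&Hm12).
    destruct (E4 M2 U2 H2) as (M1'&U1'&H1'&Hs21&Hm21).
    pose proof (unfolds_det _ _ _ HU H1') as Eq. injection Eq as <- <-.
    pose proof (unfolds_ST _ _ HU S1) as SU1. pose proof (unfolds_ST _ _ H2 S2) as SU2.
    apply ST_outS in SU1. apply ST_outS in SU2.
    exists (Mmap M2), (Mmap U2). split; [apply (unfolds_M _ _ H2)|split; apply Mk; tauto].
  - intros cs H. apply M_unfolds in H. destruct H as (U&HU&E). symmetry in E. apply Mshape_ext in E.
    destruct E as (ls1&->&->). destruct (D6 ls1 HU) as (ls2&H2&Hl12).
    destruct (E6 ls2 H2) as (ls1'&H1'&Hl21).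
    pose proof (unfolds_det _ _ _ HU H1') as Eq. injection Eq as <-.
    pose proof (unfolds_ST _ _ HU S1) as SU1. pose proof (unfolds_ST _ _ H2 S2) as SU2.
    apply ST_bra in SU1. apply ST_bra in SU2.
    exists (mapM ls2). split; [apply (unfolds_M _ _ H2)|].
    intros l a' Hin. apply in_mapsnd in Hin. destruct Hin as (Ti&Hin&->).
    destruct (Hl12 l Ti Hin) as (Si&HinS&Hts). destruct (Hl21 l Si HinS) as (Ti'&HinT&Hst).
    assert (Ti' = Ti) by (eapply nodup_in; [apply SU1|eauto|eauto]). subst Ti'.
    exists (Mmap Si). split; [apply in_mapsnd; eauto|]. apply Mk; auto.
    + apply (proj2 (proj2 SU1) l Ti Hin). + apply (proj2 (proj2 SU2) l Si HinS).
  - intros cs H. apply M_unfolds in H. destruct H as (U&HU&E). symmetry in E. apply Mshape_int in E.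
    destruct E as (ls1&->&->). destruct (D7 ls1 HU) as (ls2&H2&Hl12).
    destruct (E7 ls2 H2) as (ls1'&H1'&Hl21).
    pose proof (unfolds_det _ _ _ HU H1') as Eq. injection Eq as <-.
    pose proof (unfolds_ST _ _ HU S1) as SU1. pose proof (unfolds_ST _ _ H2 S2) as SU2.
    apply ST_sel in SU1. apply ST_sel in SU2.
    exists (mapM ls2). split; [apply (unfolds_M _ _ H2)|].
    intros l a' Hin. apply in_mapsnd in Hin. destruct Hin as (Ti&Hin&->).
    destruct (Hl21 l Ti Hin) as (Si&HinS&Hst). destruct (Hl12 l Si HinS) as (Ti'&HinT&Hts).
    assert (Ti' = Ti) by (eapply nodup_in; [apply SU1|eauto|eauto]). subst Ti'.
    exists (Mmap Si). split; [apply in_mapsnd; eauto|]. apply Mk; auto.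
    + apply (proj2 (proj2 SU1) l Ti Hin). + apply (proj2 (proj2 SU2) l Si HinS).
Qed.

Lemma types_ceq T1 T2 : ST T1 -> ST T2 -> sbt_eq leb T1 T2 -> ceq leb (Mmap T1) (Mmap T2).
Proof. intros. exists TRel. split; [apply TRel_sim|]. exists T1, T2. auto. Qed.

End TypesCeq.

Section Forward.
Context {BT L : Type}.
Notation stype := (@stype BT L).
Notation contract := (@contract BT L).
Implicit Types (cs : list (L * contract)) (a b s r : contract).
Variable leb : BT -> BT -> Prop.
Hypothesis leb_trans : forall t1 t2 t3, leb t1 t2 -> leb t2 t3 -> leb t1 t3.

Definition Bq a b : Prop := ceq leb a b \/ (a = b /\ SC a).

Lemma Bq_trans a b c : Bq a b -> Bq b c -> Bq a c.
Proof.
  intros [H1|[-> S1]] [H2|[-> S2]].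
  - left. eapply ceq_trans; eauto.
  - left. auto.
  - left. auto.
  - right. split; auto.
Qed.

Lemma ceq_Bq a b : ceq leb a b -> Bq a b.
Proof. left; auto. Qed.

Lemma single_of_in {X : Type} (x : X) xs : In x xs -> length xs <= 1 -> xs = [x].
Proof. destruct xs as [|y [|z r]]; simpl; intros H Hl; try lia; try contradiction. destruct H as [->|[]]; auto. Qed.

Notation comply := (comply leb Bq).

Definition CR r s : Prop := exists s1 s0, comply r s1 /\ ceq leb s1 s0 /\ mstar s0 s.

Ltac absurd_step := match goal with
  | H : ctau COne _ |- _ => inversion H
  | H : ctau (CInB _ _) _ |- _ => inversion H
  | H : ctau (COutB _ _) _ |- _ => inversion H
  | H : ctau (CInC _ _) _ |- _ => inversion H
  | H : ctau (COutC _ _) _ |- _ => inversion H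
  | H : ctau (CExt _) _ |- _ => inversion H
  | H : ctau (CVar _) _ |- _ => inversion H
  | H : cstep COne _ _ |- _ => inversion H
  | H : cstep (CMu _ _) _ _ |- _ => inversion H
  | H : cstep (CVar _) _ _ |- _ => inversion H
  end.

Lemma CR_sim : comply_sim leb Bq CR.
Proof.
  intros r s (s1&s0&Hc&He&Hm).
  assert (He' : ceq leb s0 s1) by (apply ceq_sym; auto).
  destruct (ceq_is_sim leb _ _ He') as (_&_&_&Cv0&C01&C02&C03&C04&C05&C06&C07).
  destruct (ceq_is_sim leb _ _ He) as (_&_&_&Cv1&C11&C12&C13&C14&C15&C16&C17).
  assert (Left : forall r', ctau r r' -> CR r' s).
  { intros r' Ht. exists s1, s0. split; [|auto]. eapply comply_tau; eauto. apply pt_l; auto. }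
  assert (Hu0 : c_not_mu s -> cunf s0 s) by (intros N; eapply mstar_cunf; eauto; apply cunf_other; auto).
  destruct s as [|t u|t u|c u|c u|cs|cs|x u|x].
  -
    assert (Hc1 : comply r COne) by (eapply comply_cunf; eauto; apply C01; apply Hu0; simpl; auto).
    split.
    + intros Hn. apply (comply_stuck _ _ _ _ Hc1). intros r' s' Hp. inversion Hp; subst; try absurd_step.
      eapply Hn. apply pt_l; eauto.
    + intros r' s' Hp. inversion Hp; subst; try absurd_step. auto.
  -
    destruct (C02 t u (Hu0 I)) as (t1&u1&H1&Ht1&Ht1'&Heu).
    assert (Hc1 : comply r (CInB t1 u1)) by (eapply comply_cunf; eauto).
    split.
    + intros Hn. exfalso. assert (Hst : forall r' s', ~ ptau leb Bq r (CInB t1 u1) r' s').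
      { intros r' s' Hp. inversion Hp; subst; try absurd_step.
        - eapply Hn. apply pt_l; eauto.
        - match goal with H : cstep (CInB _ _) _ _, H2 : compat _ _ ?a1 _ |- _ => inversion H; subst; destruct a1; simpl in H2; try contradiction end.
          eapply Hn. eapply pt_sync; eauto; [constructor|]. simpl. eauto. }
      destruct (comply_stuck _ _ _ _ ltac:(eassumption) Hst) as [_ Ht]. discriminate.
    + intros r' s' Hp. inversion Hp; subst; try absurd_step; auto.
      match goal with H : cstep (CInB _ _) _ _, H2 : compat _ _ ?a1 _ |- _ => inversion H; subst; destruct a1; simpl in H2; try contradiction end.
      exists u1, s'. split; [|split; [apply ceq_sym; auto|constructor]].
      eapply comply_tau; eauto. eapply pt_sync; eauto; [constructor|]. simpl. eauto.
  -
    destruct (C03 t u (Hu0 I)) as (t1&u1&H1&Ht1&Ht1'&Heu).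
    assert (Hc1 : comply r (COutB t1 u1)) by (eapply comply_cunf; eauto).
    split.
    + intros Hn. exfalso. assert (Hst : forall r' s', ~ ptau leb Bq r (COutB t1 u1) r' s').
      { intros r' s' Hp. inversion Hp; subst; try absurd_step.
        - eapply Hn. apply pt_l; eauto.
        - match goal with H : cstep (COutB _ _) _ _, H2 : compat _ _ ?a1 _ |- _ => inversion H; subst; destruct a1; simpl in H2; try contradiction end.
          eapply Hn. eapply pt_sync; eauto; [constructor|]. simpl. eauto. }
      destruct (comply_stuck _ _ _ _ ltac:(eassumption) Hst) as [_ Ht]. discriminate.
    + intros r' s' Hp. inversion Hp; subst; try absurd_step; auto.
      match goal with H : cstep (COutB _ _) _ _, H2 : compat _ _ ?a1 _ |- _ => inversion H; subst; destruct a1; simpl in H2; try contradiction end.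
      exists u1, s'. split; [|split; [apply ceq_sym; auto|constructor]].
      eapply comply_tau; eauto. eapply pt_sync; eauto; [constructor|]. simpl. eauto.
  -
    destruct (C05 c u (Hu0 I)) as (c1&u1&H1&Hcc&Heu).
    assert (Hc1 : comply r (COutC c1 u1)) by (eapply comply_cunf; eauto).
    assert (Bc1 : Bq c1 c) by (apply ceq_Bq; apply ceq_sym; auto).
    split.
    + intros Hn. exfalso. assert (Hst : forall r' s', ~ ptau leb Bq r (COutC c1 u1) r' s').
      { intros r' s' Hp. inversion Hp; subst; try absurd_step.
        - eapply Hn. apply pt_l; eauto.
        - match goal with H : cstep (COutC _ _) _ _, H2 : compat _ _ ?a1 _ |- _ => inversion H; subst; destruct a1; simpl in H2; try contradiction end.
          eapply Hn. eapply pt_sync; eauto; [constructor|]. simpl. eapply Bq_trans; eauto. apply ceq_Bq; auto. }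
      destruct (comply_stuck _ _ _ _ ltac:(eassumption) Hst) as [_ Ht]. discriminate.
    + intros r' s' Hp. inversion Hp; subst; try absurd_step; auto.
      match goal with H : cstep (COutC _ _) _ _, H2 : compat _ _ ?a1 _ |- _ => inversion H; subst; destruct a1; simpl in H2; try contradiction end.
      exists u1, s'. split; [|split; [apply ceq_sym; auto|constructor]].
      eapply comply_tau; eauto. eapply pt_sync; eauto; [constructor|]. simpl. eapply Bq_trans; eauto.
  -
    destruct (C04 c u (Hu0 I)) as (c1&u1&H1&Hcc&Heu).
    assert (Hc1 : comply r (CInC c1 u1)) by (eapply comply_cunf; eauto).
    assert (Bc1 : Bq c c1) by (apply ceq_Bq; auto).
    split.
    + intros Hn. exfalso. assert (Hst : forall r' s', ~ ptau leb Bq r (CInC c1 u1) r' s').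
      { intros r' s' Hp. inversion Hp; subst; try absurd_step.
        - eapply Hn. apply pt_l; eauto.
        - match goal with H : cstep (CInC _ _) _ _, H2 : compat _ _ ?a1 _ |- _ => inversion H; subst; destruct a1; simpl in H2; try contradiction end.
          eapply Hn. eapply pt_sync; eauto; [constructor|]. simpl. eapply Bq_trans; eauto. apply ceq_Bq; apply ceq_sym; auto. }
      destruct (comply_stuck _ _ _ _ ltac:(eassumption) Hst) as [_ Ht]. discriminate.
    + intros r' s' Hp. inversion Hp; subst; try absurd_step; auto.
      match goal with H : cstep (CInC _ _) _ _, H2 : compat _ _ ?a1 _ |- _ => inversion H; subst; destruct a1; simpl in H2; try contradiction end.
      exists u1, s'. split; [|split; [apply ceq_sym; auto|constructor]].
      eapply comply_tau; eauto. eapply pt_sync; eauto; [constructor|]. simpl. eapply Bq_trans; eauto.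
  -
    destruct (C06 cs (Hu0 I)) as (cs1&H1&Hl).
    assert (Hc1 : comply r (CExt cs1)) by (eapply comply_cunf; eauto).
    destruct (C16 cs1 H1) as (cs'&H0'&Hl'). pose proof (cunf_det _ _ _ (Hu0 I) H0') as E. injection E as <-.
    split.
    + intros Hn. exfalso. assert (Hst : forall r' s', ~ ptau leb Bq r (CExt cs1) r' s').
      { intros r' s' Hp. inversion Hp; subst; try absurd_step.
        - eapply Hn. apply pt_l; eauto.
        - match goal with H : cstep (CExt _) _ _, H2 : compat _ _ ?a1 _ |- _ =>
            apply cstep_ext_inv in H; destruct H as (l&Hin&->); destruct a1; simpl in H2; try contradiction end.
          subst. destruct (Hl' _ _ Hin) as (a&Hina&_).
          eapply Hn. eapply pt_sync; eauto; [apply cs_ext; eauto|]. simpl. auto. }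
      destruct (comply_stuck _ _ _ _ ltac:(eassumption) Hst) as [_ Ht]. discriminate.
    + intros r' s' Hp. inversion Hp; subst; try absurd_step; auto.
      match goal with H : cstep (CExt _) _ _, H2 : compat _ _ ?a1 _ |- _ =>
        apply cstep_ext_inv in H; destruct H as (l&Hin&->); destruct a1; simpl in H2; try contradiction end.
      subst. destruct (Hl _ _ Hin) as (b&Hinb&Heb).
      exists b, s'. split; [|split; [apply ceq_sym; auto|constructor]].
      eapply comply_tau; eauto. eapply pt_sync; eauto; [apply cs_ext; eauto|]. simpl. auto.
  -
    destruct (C07 cs (Hu0 I)) as (cs1&H1&Hl).
    assert (Hc1 : comply r (CInt cs1)) by (eapply comply_cunf; eauto).
    destruct (C17 cs1 H1) as (cs'&H0'&Hl'). pose proof (cunf_det _ _ _ (Hu0 I) H0') as E. injection E as <-.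
    assert (Sg : forall l b, In (l, b) cs1 -> comply r (CInt [(l, b)])).
    { intros l b Hin. destruct (Nat.lt_ge_cases 1 (length cs1)) as [Hlt|Hge].
      - eapply comply_tau; eauto. apply pt_r. apply ct_int; auto.
      - rewrite <- (single_of_in _ _ Hin Hge). auto. }
    split.
    + intros Hn. exfalso.
      assert (Hlen : length cs <= 1).
      { destruct cs as [|[l a] [|q rest]]; simpl; try lia. exfalso. eapply Hn. apply pt_r.
        apply ct_int with (l := l) (s := a); simpl; auto. lia. }
      destruct cs1 as [|[l b] rest1].
      * assert (Hst : forall r' s', ~ ptau leb Bq r (CInt []) r' s').
        { intros r' s' Hp. inversion Hp; subst.
          - eapply Hn. apply pt_l; eauto.
          - match goal with H : ctau (CInt _) _ |- _ => apply ctau_int_inv in H; destruct H as (?&?&Hl2&_) end. simpl in Hl2. lia.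
          - match goal with H : cstep (CInt []) _ _ |- _ => apply cstep_int_inv in H; destruct H as (?&E&_); discriminate end. }
        destruct (comply_stuck _ _ _ _ ltac:(eassumption) Hst) as [_ Ht]. discriminate.
      * destruct (Hl' l b (or_introl eq_refl)) as (a&Hina&_).
        pose proof (single_of_in _ _ Hina Hlen) as ->.
        pose proof (Sg l b (or_introl eq_refl)) as Hc2.
        assert (Hst : forall r' s', ~ ptau leb Bq r (CInt [(l, b)]) r' s').
        { intros r' s' Hp. inversion Hp; subst.
          - eapply Hn. apply pt_l; eauto.
          - match goal with H : ctau (CInt _) _ |- _ => apply ctau_int_inv in H; destruct H as (?&?&Hl2&_) end. simpl in Hl2. lia.
          - match goal with H : cstep (CInt _) _ _, H2 : compat _ _ ?a1 _ |- _ =>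
              apply cstep_int_inv in H; destruct H as (l0&E&->); injection E as E1 E2; subst; destruct a1; simpl in H2; try contradiction end.
            subst. eapply Hn. eapply pt_sync; eauto; [apply cs_outL|]. simpl. auto. }
        destruct (comply_stuck _ _ _ _ ltac:(eassumption) Hst) as [_ Ht]. discriminate.
    + intros r' s' Hp. inversion Hp; subst; auto.
      * match goal with H : ctau (CInt _) _ |- _ => apply ctau_int_inv in H; destruct H as (l&a&_&Hin&->) end.
        destruct (Hl _ _ Hin) as (b&Hinb&Heb).
        exists (CInt [(l, b)]), (CInt [(l, a)]). split; [apply Sg; auto|split; [|constructor]].
        apply ceq_single. apply ceq_sym; auto.
      * match goal with H : cstep (CInt _) _ _, H2 : compat _ _ ?a1 _ |- _ =>
          apply cstep_int_inv in H; destruct H as (l&->&->); destruct a1; simpl in H2; try contradiction end.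
        subst. destruct (Hl _ _ (or_introl eq_refl)) as (b&Hinb&Heb).
        exists b, s'. split; [|split; [apply ceq_sym; auto|constructor]].
        eapply comply_tau; [apply (Sg _ _ Hinb)|]. eapply pt_sync; eauto; [apply cs_outL|]. simpl. auto.
  -
    split.
    + intros Hn. exfalso. eapply Hn. apply pt_r. constructor.
    + intros r' s' Hp. inversion Hp; subst; try absurd_step; auto.
      match goal with H : ctau (CMu _ _) _ |- _ => inversion H; subst end.
      exists s1, s0. split; auto. split; auto. apply mstar_snoc. auto.
  -
    exfalso. apply (Cv0 x). apply Hu0. simpl. auto.
Qed.

Lemma ceq_transfer a b r : ceq leb a b -> comply r a -> comply r b.
Proof.
  intros He Hc. exists CR. split; [apply CR_sim|]. exists a, b. split; auto. split; auto. constructor.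
Qed.

Lemma Bq_good : preorder_on_SC Bq /\ (forall x y, Bq x y -> sqsubB leb Bq x y).
Proof.
  split.
  - split; [|split].
    + intros x y [H|[-> S]]; auto. apply ceq_SC in H; auto.
    + intros x Sx. right. auto.
    + intros x y z; apply Bq_trans.
  - intros x y [H|[-> S]].
    + destruct (ceq_SC _ _ _ H). split; [auto|split; [auto|]]. intros r _ Hc. eapply ceq_transfer; eauto.
    + split; [auto|split; auto].
Qed.

Theorem forward (S T : stype) : ST S -> ST T -> sbt_eq leb S T ->
  sqsub leb (Mmap S) (Mmap T) /\ sqsub leb (Mmap T) (Mmap S).
Proof.
  intros HS HT Heq. pose proof (types_ceq leb S T HS HT Heq) as He.
  destruct Bq_good as [P1 P2]. split.
  - exists Bq. split; auto. split; auto. left. auto.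
  - exists Bq. split; auto. split; auto. left. apply ceq_sym. auto.
Qed.

End Forward.

Section Back.
Context {BT L : Type}.
Notation stype := (@stype BT L).
Notation contract := (@contract BT L).
Implicit Types (ls : list (L * stype)) (T U V : stype) (cs : list (L * contract)) (s r c : contract).
Variable leb : BT -> BT -> Prop.
Variable Bc : contract -> contract -> Prop.
Notation comply := (comply leb Bc).
Notation mapM ls := (map (fun p => (fst p, Mmap (snd p))) ls).

Lemma stuck_false r s : comply r s -> (forall r', ~ ctau r r') -> (forall s', ~ ctau s s') ->
  (forall a1 a2 r' s', cstep r a1 r' -> cstep s a2 s' -> ~ compat leb Bc a1 a2) -> ~ (ticks r /\ ticks s) -> False.
Proof.
  intros Hc H1 H2 H3 H4.
  assert (Hn : forall r' s', ~ ptau leb Bc r s r' s').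
  { intros r' s' Hp. inversion Hp; subst; [eapply H1|eapply H2|eapply H3]; eauto. }
  apply H4. apply (comply_stuck _ _ _ _ Hc Hn).
Qed.

Lemma int_pick r cs l c : comply r (CInt cs) -> In (l, c) cs -> comply r (CInt [(l, c)]).
Proof.
  intros Hc Hin. destruct (Nat.lt_ge_cases 1 (length cs)) as [Hlt|Hge].
  - eapply comply_tau; eauto. apply pt_r. apply ct_int; auto.
  - rewrite <- (single_of_in _ _ Hin Hge). auto.
Qed.

Lemma sel_pick r ls : ST (SSel ls) -> comply r (Mmap (SSel ls)) ->
  exists l Vi, In (l, Vi) ls /\ comply r (CInt [(l, Mmap Vi)]).
Proof.
  intros HS Hc. destruct (ST_sel _ HS) as (Hne&_&_). destruct ls as [|[l Vi] rest]; [congruence|].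
  exists l, Vi. split; [simpl; auto|]. eapply int_pick; eauto. simpl. auto.
Qed.

Lemma notau_single l c (x : contract) : ~ ctau (CInt [(l, c)]) x.
Proof. intros H. apply ctau_int_inv in H. destruct H as (?&?&Hl&_). simpl in Hl. lia. Qed.

Ltac nosync := let a1 := fresh in let a2 := fresh in let r' := fresh in let s' := fresh in
  let H1 := fresh in let H2 := fresh in let Hc := fresh in
  intros a1 a2 r' s' H1 H2 Hc; inversion H1; subst; inversion H2; subst; simpl in Hc; try contradiction; try discriminate.

Ltac notau := let x := fresh in let H := fresh in intros x H; inversion H; subst; try (simpl in *; lia).

Lemma V_cases V : ST V -> not_mu V ->
  V = SEnd \/ (exists t V1, V = SInB t V1) \/ (exists t V1, V = SOutB t V1) \/
  (exists M V1, V = SInS M V1) \/ (exists M V1, V = SOutS M V1) \/ (exists ls, V = SBra ls) \/ (exists ls, V = SSel ls).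
Proof.
  intros HS NM. destruct V; eauto 10. - simpl in NM; contradiction.
  - exfalso. destruct HS as (_&_&C). apply (C n). simpl. auto.
Qed.


Ltac kill Hc := eapply stuck_false; [exact Hc|notau|notau|nosync|unfold ticks; intros [? ?]; discriminate].
Ltac killsel HS Hc := let l := fresh "l" in let Vi := fresh "Vi" in let Hc2 := fresh "Hc2" in
  destruct (sel_pick _ _ HS Hc) as (l&Vi&_&Hc2);
  eapply stuck_false; [exact Hc2|notau|apply notau_single|nosync|unfold ticks; intros [? ?]; discriminate].

Lemma L_one V : ST V -> not_mu V -> comply COne (Mmap V) -> V = SEnd.
Proof.
  intros HS NM Hc. destruct (V_cases V HS NM) as [->|[(t&V1&->)|[(t&V1&->)|[(Mg&V1&->)|[(Mg&V1&->)|[(ls&->)|(ls&->)]]]]]];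
    auto; exfalso.
  all: try solve [killsel HS Hc].
  all: simpl in Hc; kill Hc.
Qed.

Lemma L_outB t r V : ST V -> not_mu V -> comply (COutB t r) (Mmap V) ->
  exists t2 V1, V = SInB t2 V1 /\ leb t t2 /\ comply r (Mmap V1).
Proof.
  intros HS NM Hc. destruct (V_cases V HS NM) as [->|[(t2&V1&->)|[(t2&V1&->)|[(Mg&V1&->)|[(Mg&V1&->)|[(ls&->)|(ls&->)]]]]]].
  all: try solve [exfalso; killsel HS Hc].
  all: simpl in Hc.
  all: try solve [exfalso; kill Hc].
  destruct (classic (leb t t2)) as [Hl|Hl].
  - exists t2, V1. split; auto. split; auto. eapply comply_tau; eauto. eapply pt_sync; [constructor|constructor|]. simpl. auto.
  - exfalso. eapply stuck_false; [exact Hc|notau|notau| |unfold ticks; intros [? ?]; discriminate]. nosync; auto.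
Qed.

Lemma L_inB t r V : ST V -> not_mu V -> comply (CInB t r) (Mmap V) ->
  exists t2 V1, V = SOutB t2 V1 /\ leb t2 t /\ comply r (Mmap V1).
Proof.
  intros HS NM Hc. destruct (V_cases V HS NM) as [->|[(t2&V1&->)|[(t2&V1&->)|[(Mg&V1&->)|[(Mg&V1&->)|[(ls&->)|(ls&->)]]]]]].
  all: try solve [exfalso; killsel HS Hc].
  all: simpl in Hc.
  all: try solve [exfalso; kill Hc].
  destruct (classic (leb t2 t)) as [Hl|Hl].
  - exists t2, V1. split; auto. split; auto. eapply comply_tau; eauto. eapply pt_sync; [constructor|constructor|]. simpl. auto.
  - exfalso. eapply stuck_false; [exact Hc|notau|notau| |unfold ticks; intros [? ?]; discriminate]. nosync; auto.
Qed.

Lemma L_outC c r V : ST V -> not_mu V -> comply (COutC c r) (Mmap V) ->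
  exists Vc V1, V = SInS Vc V1 /\ Bc c (Mmap Vc) /\ comply r (Mmap V1).
Proof.
  intros HS NM Hc. destruct (V_cases V HS NM) as [->|[(t2&V1&->)|[(t2&V1&->)|[(Mg&V1&->)|[(Mg&V1&->)|[(ls&->)|(ls&->)]]]]]].
  all: try solve [exfalso; killsel HS Hc].
  all: simpl in Hc.
  all: try solve [exfalso; kill Hc].
  destruct (classic (Bc c (Mmap Mg))) as [Hl|Hl].
  - exists Mg, V1. split; auto. split; auto. eapply comply_tau; eauto. eapply pt_sync; [constructor|constructor|]. simpl. auto.
  - exfalso. eapply stuck_false; [exact Hc|notau|notau| |unfold ticks; intros [? ?]; discriminate]. nosync; auto.
Qed.

Lemma L_inC c r V : ST V -> not_mu V -> comply (CInC c r) (Mmap V) ->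
  exists Vc V1, V = SOutS Vc V1 /\ Bc (Mmap Vc) c /\ comply r (Mmap V1).
Proof.
  intros HS NM Hc. destruct (V_cases V HS NM) as [->|[(t2&V1&->)|[(t2&V1&->)|[(Mg&V1&->)|[(Mg&V1&->)|[(ls&->)|(ls&->)]]]]]].
  all: try solve [exfalso; killsel HS Hc].
  all: simpl in Hc.
  all: try solve [exfalso; kill Hc].
  destruct (classic (Bc (Mmap Mg) c)) as [Hl|Hl].
  - exists Mg, V1. split; auto. split; auto. eapply comply_tau; eauto. eapply pt_sync; [constructor|constructor|]. simpl. auto.
  - exfalso. eapply stuck_false; [exact Hc|notau|notau| |unfold ticks; intros [? ?]; discriminate]. nosync; auto.
Qed.


Lemma L_selL l r V : ST V -> not_mu V -> comply (CInt [(l, r)]) (Mmap V) ->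
  exists ls Vi, V = SBra ls /\ In (l, Vi) ls /\ comply r (Mmap Vi).
Proof.
  intros HS NM Hc. destruct (V_cases V HS NM) as [->|[(t2&V1&->)|[(t2&V1&->)|[(Mg&V1&->)|[(Mg&V1&->)|[(ls&->)|(ls&->)]]]]]].
  all: try solve [exfalso; killsel HS Hc].
  all: simpl in Hc.
  all: try solve [exfalso; kill Hc].
  destruct (classic (exists Vi, In (l, Vi) ls)) as [(Vi&Hin)|Hn].
  - exists ls, Vi. split; auto. split; auto. eapply comply_tau; eauto.
    eapply pt_sync; [constructor|apply cs_ext; apply in_mapsnd; eauto|]. simpl. auto.
  - exfalso. eapply stuck_false; [exact Hc|apply notau_single|notau| |unfold ticks; intros [? ?]; discriminate].
    intros a1 a2 r' s' H1 H2 Hcp. apply cstep_int_inv in H1. destruct H1 as (l0&E&->). injection E as -> ->.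
    apply cstep_ext_inv in H2. destruct H2 as (l'&Hin&->). simpl in Hcp. subst.
    apply in_mapsnd in Hin. destruct Hin as (Vi&Hin&->). eauto.
Qed.

Lemma L_ext cs V : ST V -> not_mu V -> comply (CExt cs) (Mmap V) ->
  exists ls, V = SSel ls /\ forall l Vi, In (l, Vi) ls -> exists c, In (l, c) cs /\ comply c (Mmap Vi).
Proof.
  intros HS NM Hc. destruct (V_cases V HS NM) as [->|[(t2&V1&->)|[(t2&V1&->)|[(Mg&V1&->)|[(Mg&V1&->)|[(ls&->)|(ls&->)]]]]]].
  all: try (simpl in Hc; solve [exfalso; kill Hc]).
  exists ls. split; auto. intros l Vi Hin.
  assert (Hc2 : comply (CExt cs) (CInt [(l, Mmap Vi)])) by (apply (int_pick _ (mapM ls)); [exact Hc|apply (proj2 (in_mapsnd Mmap ls l (Mmap Vi))); exists Vi; split; auto]).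
  destruct (classic (exists c, In (l, c) cs)) as [(c&Hinc)|Hn].
  - exists c. split; auto. eapply comply_tau; eauto.
    eapply pt_sync; [apply cs_ext; eauto|constructor|]. simpl. auto.
  - exfalso. eapply stuck_false; [exact Hc2|notau|apply notau_single| |unfold ticks; intros [? ?]; discriminate].
    intros a1 a2 r' s' H1 H2 Hcp. apply cstep_int_inv in H2. destruct H2 as (l0&E&->). injection E as E1 E2. subst.
    apply cstep_ext_inv in H1. destruct H1 as (l'&Hin'&->). simpl in Hcp. subst. eauto.
Qed.

Ltac onlysync := let r' := fresh in let s' := fresh in let Hp := fresh in
  intros r' s' Hp; inversion Hp; subst; [exfalso; match goal with H : ctau _ _ |- _ => inversion H end
    |exfalso; match goal with H : ctau _ _ |- _ => inversion H end|].

Lemma pre_outB t r u : leb t t -> comply r u -> comply (COutB t r) (CInB t u).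
Proof.
  intros Hl Hc. apply comply_intro.
  - do 2 eexists. eapply pt_sync; [constructor|constructor|]. simpl. auto.
  - onlysync. match goal with H1 : cstep (COutB _ _) _ _, H2 : cstep (CInB _ _) _ _ |- _ => inversion H1; inversion H2; subst end. auto.
Qed.
Lemma pre_inB t r u : leb t t -> comply r u -> comply (CInB t r) (COutB t u).
Proof.
  intros Hl Hc. apply comply_intro.
  - do 2 eexists. eapply pt_sync; [constructor|constructor|]. simpl. auto.
  - onlysync. match goal with H1 : cstep (CInB _ _) _ _, H2 : cstep (COutB _ _) _ _ |- _ => inversion H1; inversion H2; subst end. auto.
Qed.
Lemma pre_outC c r u : Bc c c -> comply r u -> comply (COutC c r) (CInC c u).
Proof.
  intros Hl Hc. apply comply_intro.
  - do 2 eexists. eapply pt_sync; [constructor|constructor|]. simpl. auto.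
  - onlysync. match goal with H1 : cstep (COutC _ _) _ _, H2 : cstep (CInC _ _) _ _ |- _ => inversion H1; inversion H2; subst end. auto.
Qed.
Lemma pre_inC c r u : Bc c c -> comply r u -> comply (CInC c r) (COutC c u).
Proof.
  intros Hl Hc. apply comply_intro.
  - do 2 eexists. eapply pt_sync; [constructor|constructor|]. simpl. auto.
  - onlysync. match goal with H1 : cstep (CInC _ _) _ _, H2 : cstep (COutC _ _) _ _ |- _ => inversion H1; inversion H2; subst end. auto.
Qed.

Lemma pre_sel l r ds : (exists s, In (l, s) ds) -> (forall s, In (l, s) ds -> comply r s) ->
  comply (CInt [(l, r)]) (CExt ds).
Proof.
  intros (s0&Hin0) Hall. apply comply_intro.
  - do 2 eexists. eapply pt_sync; [constructor|apply cs_ext; eauto|]. simpl. auto.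
  - intros r' s' Hp. inversion Hp; subst.
    + exfalso. eapply notau_single; eauto.
    + exfalso. match goal with H : ctau _ _ |- _ => inversion H end.
    + match goal with H1 : cstep (CInt _) _ _, H2 : cstep (CExt _) _ _, Hcp : compat _ _ _ _ |- _ =>
        apply cstep_int_inv in H1; destruct H1 as (l0&E&->); injection E as -> ->;
        apply cstep_ext_inv in H2; destruct H2 as (l'&Hin&->); simpl in Hcp; subst end.
      auto.
Qed.

Lemma pre_ext1 l cs s : (exists c, In (l, c) cs) -> (forall c, In (l, c) cs -> comply c s) ->
  comply (CExt cs) (CInt [(l, s)]).
Proof.
  intros (c0&Hin0) Hall. apply comply_intro.
  - do 2 eexists. eapply pt_sync; [apply cs_ext; eauto|constructor|]. simpl. auto.
  - intros r' s' Hp. inversion Hp; subst.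
    + exfalso. match goal with H : ctau _ _ |- _ => inversion H end.
    + exfalso. eapply notau_single; eauto.
    + match goal with H1 : cstep (CExt _) _ _, H2 : cstep (CInt _) _ _, Hcp : compat _ _ _ _ |- _ =>
        apply cstep_int_inv in H2; destruct H2 as (l0&E&->); injection E as -> ->;
        apply cstep_ext_inv in H1; destruct H1 as (l'&Hin&->); simpl in Hcp; subst end.
      auto.
Qed.

Lemma pre_ext cs ds : ds <> [] -> (forall l s, In (l, s) ds -> exists c, In (l, c) cs) ->
  (forall l s c, In (l, s) ds -> In (l, c) cs -> comply c s) -> comply (CExt cs) (CInt ds).
Proof.
  intros Hne Hex Hall. destruct ds as [|[l s] [|q rest]]; [congruence| |].
  - apply pre_ext1. + eapply Hex. simpl; eauto. + intros c Hc. eapply Hall; eauto. simpl. auto.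
  - apply comply_intro.
    + do 2 eexists. apply pt_r. apply ct_int with (l := l) (s := s); simpl; auto. lia.
    + intros r' s' Hp. inversion Hp; subst.
      * exfalso. match goal with H : ctau _ _ |- _ => inversion H end.
      * match goal with H : ctau (CInt _) _ |- _ => apply ctau_int_inv in H; destruct H as (l1&s1&_&Hin&->) end.
        apply pre_ext1; eauto.
      * exfalso. match goal with H : cstep (CInt _) _ _ |- _ => apply cstep_int_inv in H; destruct H as (?&E&_); discriminate end.
Qed.

End Back.

Section SCLemmas.
Context {BT L : Type}.
Notation stype := (@stype BT L).
Notation contract := (@contract BT L).

Lemma SC_outB t (r : contract) : SC r -> SC (COutB t r).
Proof. intros (W&G&C). split; [|split]; simpl; auto. Qed.
Lemma SC_inB t (r : contract) : SC r -> SC (CInB t r).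
Proof. intros (W&G&C). split; [|split]; simpl; auto. Qed.
Lemma SC_outC (c r : contract) : SC c -> SC r -> SC (COutC c r).
Proof. intros (W&G&C) (W'&G'&C'). split; [|split]; simpl; auto. intros X [H|H]; [eapply C|eapply C']; eauto. Qed.
Lemma SC_inC (c r : contract) : SC c -> SC r -> SC (CInC c r).
Proof. intros (W&G&C) (W'&G'&C'). split; [|split]; simpl; auto. intros X [H|H]; [eapply C|eapply C']; eauto. Qed.
Lemma SC_ext (cs : list (L * contract)) : cs <> [] -> NoDup (map fst cs) -> (forall l c, In (l, c) cs -> SC c) -> SC (CExt cs).
Proof.
  intros Hne Hnd Hall. split; [|split].
  - apply cwf_ext. split; [auto|split; [auto|]]. intros l c Hin. apply (Hall l c Hin).
  - apply cguarded_ext. intros l c Hin. apply (Hall l c Hin).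
  - intros X Hf. apply cfree_ext in Hf. destruct Hf as (l&c&Hin&Hf). destruct (Hall l c Hin) as (_&_&C). eapply C; eauto.
Qed.
Lemma SC_cl (T : stype) : ST T -> SC (cl T).
Proof. intros. unfold cl. apply M_SC. apply ST_cdual. auto. Qed.
Lemma unfolds_not_mu (T U : stype) : unfolds T U -> not_mu U.
Proof. induction 1; auto. Qed.

End SCLemmas.

Section Half.
Context {BT L : Type}.
Notation stype := (@stype BT L).
Notation contract := (@contract BT L).
Implicit Types (ls : list (L * stype)) (T U V : stype) (cs : list (L * contract)).
Variable leb : BT -> BT -> Prop.
Variable Bc : contract -> contract -> Prop.
Hypothesis leb_refl : forall t, leb t t.
Hypothesis Bc_refl : forall s, SC s -> Bc s s.
Hypothesis Bc_sq : forall x y, Bc x y -> sqsubB leb Bc x y.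
Variable f : L -> nat.
Hypothesis f_inj : forall l1 l2, f l1 = f l2 -> l1 = l2.
Notation comply := (comply leb Bc).
Notation sq := (sqsubB leb Bc).
Notation mapM ls := (map (fun p => (fst p, Mmap (snd p))) ls).

Lemma dual_ok T : ST T -> comply (cl T) (Mmap T).
Proof. intros. apply dual_comply; auto. Qed.

Lemma half T S : ST T -> ST S -> sq (Mmap T) (Mmap S) ->
  (unfolds T SEnd -> unfolds S SEnd) /\
  (forall t1 T1, unfolds T (SInB t1 T1) -> exists t2 S1, unfolds S (SInB t2 S1) /\ leb t1 t2 /\ sq (Mmap T1) (Mmap S1)) /\
  (forall t1 T1, unfolds T (SOutB t1 T1) -> exists t2 S1, unfolds S (SOutB t2 S1) /\ leb t2 t1 /\ sq (Mmap T1) (Mmap S1)) /\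
  (forall Tc T1, unfolds T (SInS Tc T1) -> exists Sc S1, unfolds S (SInS Sc S1) /\ sq (Mmap Tc) (Mmap Sc) /\ sq (Mmap T1) (Mmap S1)) /\
  (forall Tc T1, unfolds T (SOutS Tc T1) -> exists Sc S1, unfolds S (SOutS Sc S1) /\ sq (Mmap Sc) (Mmap Tc) /\ sq (Mmap T1) (Mmap S1)) /\
  (forall ls, unfolds T (SBra ls) -> exists ls', unfolds S (SBra ls') /\
     forall l Ti, In (l, Ti) ls -> exists Si, In (l, Si) ls' /\ sq (Mmap Ti) (Mmap Si)) /\
  (forall ls, unfolds T (SSel ls) -> exists ls', unfolds S (SSel ls') /\
     (forall l Si, In (l, Si) ls' -> exists Ti, In (l, Ti) ls) /\
     forall l Ti Si, In (l, Ti) ls -> In (l, Si) ls' -> sq (Mmap Ti) (Mmap Si)).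
Proof.
  intros HT HS (SCT&SCS&Htr).
  destruct (exists_unfold S HS) as (S'&HS').
  pose proof (unfolds_ST _ _ HS' HS) as STS'. pose proof (unfolds_not_mu _ _ HS') as NMS'.
  assert (Tr : forall U r, unfolds T U -> SC r -> comply r (Mmap U) -> comply r (Mmap S')).
  { intros U r HU Sr Hc. eapply comply_cunf; [|apply unfolds_M; eauto]. apply Htr; auto.
    eapply comply_bwd; [apply cunf_mstar; apply unfolds_M; eauto|auto]. }
  split; [|split; [|split; [|split; [|split; [|split]]]]].
  - intros HU. pose proof (Tr _ COne HU) as H. simpl in H.
    assert (SCone : SC (@COne BT L)) by (split; [|split]; simpl; auto).
    apply L_one in H; auto. { subst. auto. } apply comply_one.
  - intros t1 T1 HU. pose proof (unfolds_ST _ _ HU HT) as ST1. apply ST_inB in ST1.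
    assert (Test : forall r, SC r -> comply r (Mmap T1) -> exists t2 V1, S' = SInB t2 V1 /\ leb t1 t2 /\ comply r (Mmap V1)).
    { intros r Sr Hr. apply L_outB; auto. apply (Tr _ _ HU); [apply SC_outB; auto|]. simpl. apply pre_outB; auto. }
    destruct (Test (cl T1) (SC_cl _ ST1) (dual_ok _ ST1)) as (t2&V1&->&Hl&_).
    exists t2, V1. split; auto. split; auto. apply ST_inB in STS'.
    split; [apply M_SC; auto|split; [apply M_SC; auto|]]. intros r Sr Hr.
    destruct (Test r Sr Hr) as (t3&V2&E&_&Hc). injection E as <- <-. auto.
  - intros t1 T1 HU. pose proof (unfolds_ST _ _ HU HT) as ST1. apply ST_outB in ST1.
    assert (Test : forall r, SC r -> comply r (Mmap T1) -> exists t2 V1, S' = SOutB t2 V1 /\ leb t2 t1 /\ comply r (Mmap V1)).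
    { intros r Sr Hr. apply L_inB; auto. apply (Tr _ _ HU); [apply SC_inB; auto|]. simpl. apply pre_inB; auto. }
    destruct (Test (cl T1) (SC_cl _ ST1) (dual_ok _ ST1)) as (t2&V1&->&Hl&_).
    exists t2, V1. split; auto. split; auto. apply ST_outB in STS'.
    split; [apply M_SC; auto|split; [apply M_SC; auto|]]. intros r Sr Hr.
    destruct (Test r Sr Hr) as (t3&V2&E&_&Hc). injection E as <- <-. auto.
  - intros Tc T1 HU. pose proof (unfolds_ST _ _ HU HT) as ST1. apply ST_inS in ST1. destruct ST1 as [STc ST1].
    assert (Test : forall r, SC r -> comply r (Mmap T1) -> exists Vc V1, S' = SInS Vc V1 /\ Bc (Mmap Tc) (Mmap Vc) /\ comply r (Mmap V1)).
    { intros r Sr Hr. apply L_outC; auto. apply (Tr _ _ HU); [apply SC_outC; auto; apply M_SC; auto|]. simpl.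
      apply pre_outC; auto. apply Bc_refl. apply M_SC; auto. }
    destruct (Test (cl T1) (SC_cl _ ST1) (dual_ok _ ST1)) as (Vc&V1&->&Hb&_).
    exists Vc, V1. split; auto. split; auto. apply ST_inS in STS'.
    split; [apply M_SC; tauto|split; [apply M_SC; tauto|]]. intros r Sr Hr.
    destruct (Test r Sr Hr) as (Vc'&V2&E&_&Hc). injection E as <- <-. auto.
  - intros Tc T1 HU. pose proof (unfolds_ST _ _ HU HT) as ST1. apply ST_outS in ST1. destruct ST1 as [STc ST1].
    assert (Test : forall r, SC r -> comply r (Mmap T1) -> exists Vc V1, S' = SOutS Vc V1 /\ Bc (Mmap Vc) (Mmap Tc) /\ comply r (Mmap V1)).
    { intros r Sr Hr. apply L_inC; auto. apply (Tr _ _ HU); [apply SC_inC; auto; apply M_SC; auto|]. simpl.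
      apply pre_inC; auto. apply Bc_refl. apply M_SC; auto. }
    destruct (Test (cl T1) (SC_cl _ ST1) (dual_ok _ ST1)) as (Vc&V1&->&Hb&_).
    exists Vc, V1. split; auto. split; auto. apply ST_outS in STS'.
    split; [apply M_SC; tauto|split; [apply M_SC; tauto|]]. intros r Sr Hr.
    destruct (Test r Sr Hr) as (Vc'&V2&E&_&Hc). injection E as <- <-. auto.
  - intros ls HU. pose proof (unfolds_ST _ _ HU HT) as STl. destruct (ST_bra _ STl) as (Hne&Hnd&Hc).
    assert (Test : forall l Ti r, In (l, Ti) ls -> SC r -> comply r (Mmap Ti) ->
      exists ls' Vi, S' = SBra ls' /\ In (l, Vi) ls' /\ comply r (Mmap Vi)).
    { intros l Ti r Hin Sr Hr. apply L_selL; auto. apply (Tr _ _ HU); [apply SC_single; auto|]. simpl.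
      apply pre_sel.
      - exists (Mmap Ti). apply in_mapsnd. eauto.
      - intros s Hs. apply in_mapsnd in Hs. destruct Hs as (Ti'&Hin'&->).
        assert (Ti' = Ti) by (eapply nodup_in; eauto). subst. auto. }
    destruct ls as [|[l0 T0] rest]; [congruence|].
    destruct (Test l0 T0 (cl T0) (or_introl eq_refl) (SC_cl _ (Hc _ _ (or_introl eq_refl))) (dual_ok _ (Hc _ _ (or_introl eq_refl))))
      as (ls'&_&->&_&_).
    exists ls'. split; auto. destruct (ST_bra _ STS') as (_&Hnd'&Hc').
    intros l Ti Hin.
    destruct (Test l Ti (cl Ti) Hin (SC_cl _ (Hc _ _ Hin)) (dual_ok _ (Hc _ _ Hin))) as (ls2&Si&E&HinS&_).
    injection E as <-. exists Si. split; auto.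
    split; [apply M_SC; eauto|split; [apply M_SC; eauto|]]. intros r Sr Hr.
    destruct (Test l Ti r Hin Sr Hr) as (ls3&Si'&E&HinS'&Hcr). injection E as <-.
    assert (Si' = Si) by (eapply nodup_in; eauto). subst. auto.
  - intros ls HU. pose proof (unfolds_ST _ _ HU HT) as STl. destruct (ST_sel _ STl) as (Hne&Hnd&Hc).
    pose proof (Tr _ _ HU (SC_cl _ STl) (dual_ok _ STl)) as H0. rewrite cl_sel in H0.
    destruct (L_ext _ _ _ _ STS' NMS' H0) as (ls'&->&Hl0).
    exists ls'. split; auto. destruct (ST_sel _ STS') as (_&Hnd'&Hc').
    split.
    + intros l Si Hin. destruct (Hl0 l Si Hin) as (c&Hinc&_). apply in_mapsnd in Hinc. destruct Hinc as (Ti&?&_). eauto.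
    + intros l Ti Si HinT HinS. split; [apply M_SC; eauto|split; [apply M_SC; eauto|]]. intros r Sr Hr.
      set (cs := map (fun p => (fst p, if Nat.eqb (f (fst p)) (f l) then r else cl (snd p))) ls).
      assert (Hcs : forall l' c, In (l', c) cs -> exists Tj, In (l', Tj) ls /\ c = (if Nat.eqb (f l') (f l) then r else cl Tj)).
      { intros l' c Hin. unfold cs in Hin. apply in_map_iff in Hin. destruct Hin as ([l2 Tj]&E&Hin). simpl in E.
        injection E as <- <-. eauto. }
      assert (SCcs : SC (CExt cs)).
      { apply SC_ext.
        - unfold cs. destruct ls; simpl; congruence.
        - assert (E : map fst cs = map fst ls) by (unfold cs; rewrite map_map; apply map_ext; auto). rewrite E. auto.
        - intros l' c Hin. apply Hcs in Hin. destruct Hin as (Tj&Hin&->).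
          destruct (Nat.eqb (f l') (f l)); auto. apply SC_cl. eauto. }
      assert (Hcomp : comply (CExt cs) (Mmap (SSel ls))).
      { simpl. apply pre_ext.
        - destruct ls; simpl; congruence.
        - intros l' s Hin. apply in_mapsnd in Hin. destruct Hin as (Tj&Hin&->).
          exists (if Nat.eqb (f l') (f l) then r else cl Tj). unfold cs. apply in_map_iff.
          exists (l', Tj). split; auto.
        - intros l' s c Hin Hinc. apply in_mapsnd in Hin. destruct Hin as (Tj&Hin&->).
          apply Hcs in Hinc. destruct Hinc as (Tj'&Hin'&->).
          assert (Tj' = Tj) by (eapply (nodup_in ls); eauto). subst Tj'.
          destruct (Nat.eqb_spec (f l') (f l)) as [E|E].
          + apply f_inj in E. subst l'. assert (Tj = Ti) by (eapply (nodup_in ls); eauto). subst. auto.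
          + apply dual_ok. eauto. }
      pose proof (Tr _ _ HU SCcs Hcomp) as H1.
      destruct (L_ext _ _ _ _ STS' NMS' H1) as (ls2&E&Hl2). injection E as <-.
      destruct (Hl2 l Si HinS) as (c&Hinc&Hcc). apply Hcs in Hinc. destruct Hinc as (Tj&_&->).
      rewrite Nat.eqb_refl in Hcc. auto.
Qed.

End Half.

Section Backward.
Context {BT L : Type}.
Notation stype := (@stype BT L).
Notation contract := (@contract BT L).
Variable leb : BT -> BT -> Prop.
Hypothesis leb_refl : forall t, leb t t.
Variable f : L -> nat.
Hypothesis f_inj : forall l1 l2, f l1 = f l2 -> l1 = l2.

Definition good (B : contract -> contract -> Prop) : Prop :=
  preorder_on_SC B /\ (forall x y, B x y -> sqsubB leb B x y).

Definition RR (T S : stype) : Prop :=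
  ST T /\ ST S /\ (exists B, good B /\ sqsubB leb B (Mmap T) (Mmap S)) /\
  (exists B, good B /\ sqsubB leb B (Mmap S) (Mmap T)).

Lemma RR_sim : sub_sim leb RR.
Proof.
  intros T S (HT&HS&(B1&[P1 Q1]&H1)&(B2&[P2 Q2]&H2)).
  assert (R1 : forall s, SC s -> B1 s s) by apply P1.
  assert (R2 : forall s, SC s -> B2 s s) by apply P2.
  destruct (half leb B1 leb_refl R1 Q1 f f_inj T S HT HS H1) as (D1&D2&D3&D4&D5&D6&D7).
  destruct (half leb B2 leb_refl R2 Q2 f f_inj S T HS HT H2) as (E1&E2&E3&E4&E5&E6&E7).
  assert (Mk : forall U V, ST U -> ST V -> sqsubB leb B1 (Mmap U) (Mmap V) -> sqsubB leb B2 (Mmap V) (Mmap U) -> RR U V).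
  { intros U V SU SV A1 A2. split; [auto|split; [auto|split]]; [exists B1|exists B2]; split; auto; split; auto. }
  split; [auto|split; [auto|split; [auto|]]].
  split; [|split; [|split; [|split; [|split]]]].
  - intros t1 T1 HU. destruct (D2 t1 T1 HU) as (t2&S1&HS1&Hl&Hq1).
    destruct (E2 t2 S1 HS1) as (t1'&T1'&HT1&_&Hq2).
    pose proof (unfolds_det _ _ _ HU HT1) as Eq. injection Eq as <- <-.
    exists t2, S1. split; auto. split; auto. apply Mk; auto.
    + eapply ST_inB. eapply unfolds_ST; eauto. + eapply ST_inB. eapply unfolds_ST; eauto.
  - intros t1 T1 HU. destruct (D3 t1 T1 HU) as (t2&S1&HS1&Hl&Hq1).
    destruct (E3 t2 S1 HS1) as (t1'&T1'&HT1&_&Hq2).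
    pose proof (unfolds_det _ _ _ HU HT1) as Eq. injection Eq as <- <-.
    exists t2, S1. split; auto. split; auto. apply Mk; auto.
    + eapply ST_outB. eapply unfolds_ST; eauto. + eapply ST_outB. eapply unfolds_ST; eauto.
  - intros Tc T1 HU. destruct (D5 Tc T1 HU) as (Sc&S1&HS1&Hc1&Hq1).
    destruct (E5 Sc S1 HS1) as (Tc'&T1'&HT1&Hc2&Hq2).
    pose proof (unfolds_det _ _ _ HU HT1) as Eq. injection Eq as <- <-.
    pose proof (ST_outS _ _ (unfolds_ST _ _ HU HT)) as [STc ST1].
    pose proof (ST_outS _ _ (unfolds_ST _ _ HS1 HS)) as [SSc SS1].
    exists Sc, S1. split; auto.
  - intros Tc T1 HU. destruct (D4 Tc T1 HU) as (Sc&S1&HS1&Hc1&Hq1).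
    destruct (E4 Sc S1 HS1) as (Tc'&T1'&HT1&Hc2&Hq2).
    pose proof (unfolds_det _ _ _ HU HT1) as Eq. injection Eq as <- <-.
    pose proof (ST_inS _ _ (unfolds_ST _ _ HU HT)) as [STc ST1].
    pose proof (ST_inS _ _ (unfolds_ST _ _ HS1 HS)) as [SSc SS1].
    exists Sc, S1. split; auto.
  - intros ls HU. destruct (D6 ls HU) as (ls'&HS1&Hl1).
    destruct (E6 ls' HS1) as (ls''&HT1&Hl2).
    pose proof (unfolds_det _ _ _ HU HT1) as Eq. injection Eq as <-.
    pose proof (ST_bra _ (unfolds_ST _ _ HU HT)) as (_&Hnd&Hc).
    pose proof (ST_bra _ (unfolds_ST _ _ HS1 HS)) as (_&Hnd'&Hc').
    exists ls'. split; auto. intros l Ti Hin. destruct (Hl1 l Ti Hin) as (Si&HinS&Hq1).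
    destruct (Hl2 l Si HinS) as (Ti'&HinT&Hq2).
    assert (Ti' = Ti) by (eapply (nodup_in ls); eauto). subst Ti'.
    exists Si. split; auto. apply Mk; eauto.
  - intros ls HU. destruct (D7 ls HU) as (ls'&HS1&Hlab&Hq1).
    destruct (E7 ls' HS1) as (ls''&HT1&_&Hq2).
    pose proof (unfolds_det _ _ _ HU HT1) as Eq. injection Eq as <-.
    pose proof (ST_sel _ (unfolds_ST _ _ HU HT)) as (_&Hnd&Hc).
    pose proof (ST_sel _ (unfolds_ST _ _ HS1 HS)) as (_&Hnd'&Hc').
    exists ls'. split; auto. intros l Si HinS. destruct (Hlab l Si HinS) as (Ti&HinT).
    exists Ti. split; auto. apply Mk; eauto.
Qed.

Theorem backward (S T : stype) : ST S -> ST T ->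
  sqsub leb (Mmap S) (Mmap T) -> sqsub leb (Mmap T) (Mmap S) -> sbt_eq leb S T.
Proof.
  intros HS HT (B1&P1&Q1&H1) (B2&P2&Q2&H2).
  assert (RST : RR S T).
  { split; [auto|split; [auto|split]]; [exists B1|exists B2]; split; [split; auto|auto| split; auto|auto]. }
  split.
  - exists RR. split; [apply RR_sim|auto].
  - exists RR. split; [apply RR_sim|]. destruct RST as (A&B&C&D). split; auto.
Qed.

End Backward.

Theorem mainTheorem2
  (BT L : Type) (leb : BT -> BT -> Prop)
  (leb_refl : forall t, leb t t)
  (leb_trans : forall t1 t2 t3, leb t1 t2 -> leb t2 t3 -> leb t1 t3)
  (L_countable : exists f : L -> nat, forall l1 l2, f l1 = f l2 -> l1 = l2)
  (S T : @stype BT L) (HS : ST S) (HT : ST T) :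
  sbt_eq leb S T <->
  (sqsub leb (Mmap S) (Mmap T) /\ sqsub leb (Mmap T) (Mmap S)).
Proof.
  destruct L_countable as (f&Hf). split.
  - intros H. apply forward; auto.
  - intros [H1 H2]. eapply backward; eauto.
Qed.
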